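(* For any $\lambda\in K\setminus\{0,1\}$, the spherical algebra $S(\lambda)$ is isomorphic to the trivial extension algebra $\mathrm{T}(C(\lambda))=C(\lambda)\ltimes D(C(\lambda))$ of $C(\lambda)$, where $D=\mathrm{Hom}_K(-,K)$.
   Context: $K$ is an algebraically closed field; paths composed left to right. For a triangulation quiver $(Q,f)$ (finite connected quiver, $\ge2$ vertices, exactly two arrows start and two end at each vertex, $f$ a permutation of arrows with $s(f(\alpha))=t(\alpha)$, $f^3=\mathrm{id}$), $\bar\alpha$ is the other arrow with source $s(\alpha)$, $g(\alpha)=\overline{f(\alpha)}$, $n_\alpha$ the $g$-orbit length; with weights $m_\alpha$ and parameters $c_\alpha\in K^*$ constant on $g$-orbits, $A_\alpha=\alpha g(\alpha)\cdots g^{m_\alpha n_\alpha-2}(\alpha)$; $\alpha$ virtual if $m_\alpha n_\alpha=2$. The weighted surface algebra is $KQ/I$, $I$ generated by $\alpha f(\alpha)-c_{\bar\alpha}A_{\bar\alpha}$ (all $\alpha$), $\alpha f(\alpha)g(f(\alpha))$ ($f^2(\alpha)$ not virtual), $\alpha g(\alpha)f(g(\alpha))$ ($f(\alpha)$ not virtual). $S(\lambda)$: vertices $1,\dots,6$; arrows $\alpha:1\to2,\beta:2\to3,\gamma:3\to4,\sigma:4\to1,\varrho:1\to6,\omega:6\to3,\nu:3\to5,\delta:5\to1,\xi:2\to5,\eta:5\to2,\mu:4\to6,\varepsilon:6\to4$; $f=(\alpha\,\xi\,\delta)(\beta\,\nu\,\eta)(\gamma\,\mu\,\omega)(\varrho\,\varepsilon\,\sigma)$;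 all weights $1$; parameter $\lambda$ on the $g$-orbit $(\alpha\,\beta\,\gamma\,\sigma)$ and $1$ on the other $g$-orbits $(\varrho\,\omega\,\nu\,\delta),(\xi\,\eta),(\mu\,\varepsilon)$. $C(\lambda)$ is the bound quiver algebra given by the quiver with vertices $1,\dots,6$ and arrows $\alpha:1\to2$, $\beta:2\to3$, $\varrho:1\to6$, $\omega:6\to3$, $\delta:5\to1$, $\sigma:4\to1$, with relations $\delta\alpha\beta=\delta\varrho\omega$ and $\sigma\varrho\omega=\lambda\sigma\alpha\beta$. *)

(* Defs.v *)
From HB Require Import structures.
From mathcomp Require Import all_boot all_order all_algebra.

Set Implicit Arguments.
Unset Strict Implicit.
Unset Printing Implicit Defensive.

Import GRing.Theory.
Local Open Scope ring_scope.

(* Generic bound quiver algebras KQ/I, with paths composed left to right.     *)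
Section Quiver.
Variables (K : fieldType) (V A : finType) (s t : A -> V).

(* A path is a starting vertex together with a (possibly empty) sequence of  *)
(* arrows; the empty sequence is the stationary path e_v.                    *)
Definition qpath := (V * seq A)%type.

Definition is_qpath (p : qpath) : bool :=
  match p.2 with
  | [::] => true
  | a :: p' => (s a == p.1) && path (fun a b => t a == s b) a p'
  end.

Definition psrc (p : qpath) : V := p.1.
Definition ptgt (p : qpath) : V := last p.1 (map t p.2).

(* Elements of the path algebra KQ as formal K-linear combinations of paths. *)
Definition kq := seq (K * qpath).
Definition kq_valid (f : kq) : bool := all (fun z => is_qpath z.2) f.
Definition kcoef (f : kq) (q : qpath) : K := \sum_(z <- f | z.2 == q) z.1.
Definition kpath (p : qpath) : kq := [:: (1, p)].
Definition kscale (c : K) (f : kq) : kq := [seq (c * z.1, z.2) | z <- f].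
Definition kmul (f g : kq) : kq :=
  flatten [seq [seq (z.1 * w.1, (z.2.1, z.2.2 ++ w.2.2)) | w <- g & ptgt z.2 == psrc w.2]
          | z <- f].

(* h lies in the two-sided ideal of KQ generated by the relations R, i.e.  *)
(* h is a K-linear combination of elements u * r * w, u, w paths, r in R.  *)
Definition in_ideal (R : seq kq) (h : kq) : Prop :=
  exists l : seq (K * qpath * kq * qpath),
    all (fun z => [&& is_qpath z.1.1.2, z.1.2 \in R & is_qpath z.2]) l /\
    forall q, kcoef h q =
      kcoef (flatten [seq kscale z.1.1.1 (kmul (kmul (kpath z.1.1.2) z.1.2) (kpath z.2))
                     | z <- l]) q.

Section Eval.
Variables (B : algType K) (e : V -> B) (x : A -> B).

Definition peval (p : qpath) : B :=
  if p.2 is [::] then e p.1 else \prod_(a <- p.2) x a.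

Definition keval (f : kq) : B := \sum_(z <- f) z.1 *: peval z.2.
End Eval.

(* B is isomorphic to KQ/I where I is the ideal generated by R: there is a   *)
(* surjective K-algebra homomorphism KQ -> B (determined by the images e_v   *)
(* of the stationary paths and x_a of the arrows) whose kernel is I.         *)
Definition presents (R : seq kq) (B : algType K) : Prop :=
  exists (e : V -> B) (x : A -> B),
    [/\ forall v w, e v * e w = (if v == w then e v else 0),
        \sum_(v : V) e v = 1,
        forall a, x a = e (s a) * x a * e (t a),
        (forall b : B, exists f, kq_valid f /\ keval e x f = b) &
        forall f, kq_valid f -> (keval e x f = 0 <-> in_ideal R f)].

(* Weighted surface algebra relations for (Q, f), weights m, parameters c. *)
Section WSA.
Variables (f : A -> A) (m : A -> nat) (c : A -> K).

Definition bar (a : A) : A := odflt a [pick b | (s b == s a) && (b != a)].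
Definition gperm (a : A) : A := bar (f a).
Definition norb (a : A) : nat := order gperm a.
Definition virtual (a : A) : bool := m a * norb a == 2.
Definition Apath (a : A) : qpath :=
  (s a, [seq iter k gperm a | k <- iota 0 (m a * norb a).-1]).

Definition wsa_rels : seq kq :=
  flatten [seq
    [:: (1, (s a, [:: a; f a])) :: kscale (- c (bar a)) (kpath (Apath (bar a)))] ++
    (if virtual (f (f a)) then [::] else [:: kpath (s a, [:: a; f a; gperm (f a)])]) ++
    (if virtual (f a) then [::] else [:: kpath (s a, [:: a; gperm a; f (gperm a)])])
  | a <- enum A].
End WSA.
End Quiver.

(* Elements are pairs (c, h) with h : C -> K K-linear; multiplication         *)
(* (a, f)(b, g) = (ab, a g + f b), where (a g)(u) = g(u a), (f b)(u) = f(b u).*)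
Section TrivExt.
Variable K : fieldType.

Definition lin_functional (C : algType K) (h : C -> K) : Prop :=
  forall (k : K) (u v : C), h (k *: u + v) = k * h u + h v.

Definition te_mul (C : algType K) (p q : C * (C -> K)) : C * (C -> K) :=
  (p.1 * q.1, (fun u => q.2 (u * p.1) + p.2 (q.1 * u))).

Definition iso_trivial_ext (S C : algType K) : Prop :=
  exists phi : S -> C * (C -> K),
    [/\ (forall (k : K) (u v : S),
          phi (k *: u + v) =
          (k *: (phi u).1 + (phi v).1, (fun w => k * (phi u).2 w + (phi v).2 w))),
        injective phi /\ (forall u, lin_functional (phi u).2),
        (forall p : C * (C -> K), lin_functional p.2 -> exists u, phi u = p),
        phi 1 = (1, (fun _ => 0)) &
        forall u v, phi (u * v) = te_mul (phi u) (phi v)].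
End TrivExt.

Inductive vtx := v1 | v2 | v3 | v4 | v5 | v6.

Definition vtx_code (v : vtx) : 'I_6 :=
  inord (match v with v1 => 0 | v2 => 1 | v3 => 2 | v4 => 3 | v5 => 4 | v6 => 5 end)%N.
Definition vtx_decode (i : 'I_6) : option vtx :=
  match nat_of_ord i with 0 => Some v1 | 1 => Some v2 | 2 => Some v3 | 3 => Some v4
  | 4 => Some v5 | 5 => Some v6 | _ => None end%N.
Lemma vtx_codeK : pcancel vtx_code vtx_decode.
Proof. by case; rewrite /vtx_decode /vtx_code /= inordK. Qed.
HB.instance Definition _ := Finite.copy vtx (pcan_type vtx_codeK).

Inductive sarr := s_alpha | s_beta | s_gamma | s_sigma | s_rho | s_omega
                | s_nu | s_delta | s_xi | s_eta | s_mu | s_eps.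

Definition sarr_code (a : sarr) : 'I_12 :=
  inord (match a with s_alpha => 0 | s_beta => 1 | s_gamma => 2 | s_sigma => 3
  | s_rho => 4 | s_omega => 5 | s_nu => 6 | s_delta => 7 | s_xi => 8 | s_eta => 9
  | s_mu => 10 | s_eps => 11 end)%N.
Definition sarr_decode (i : 'I_12) : option sarr :=
  match nat_of_ord i with 0 => Some s_alpha | 1 => Some s_beta | 2 => Some s_gamma
  | 3 => Some s_sigma | 4 => Some s_rho | 5 => Some s_omega | 6 => Some s_nu
  | 7 => Some s_delta | 8 => Some s_xi | 9 => Some s_eta | 10 => Some s_mu
  | 11 => Some s_eps | _ => None end%N.
Lemma sarr_codeK : pcancel sarr_code sarr_decode.
Proof. by case; rewrite /sarr_decode /sarr_code /= inordK. Qed.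
HB.instance Definition _ := Finite.copy sarr (pcan_type sarr_codeK).

Definition S_src (a : sarr) : vtx :=
  match a with s_alpha => v1 | s_beta => v2 | s_gamma => v3 | s_sigma => v4
  | s_rho => v1 | s_omega => v6 | s_nu => v3 | s_delta => v5 | s_xi => v2
  | s_eta => v5 | s_mu => v4 | s_eps => v6 end.
Definition S_tgt (a : sarr) : vtx :=
  match a with s_alpha => v2 | s_beta => v3 | s_gamma => v4 | s_sigma => v1
  | s_rho => v6 | s_omega => v3 | s_nu => v5 | s_delta => v1 | s_xi => v5
  | s_eta => v2 | s_mu => v6 | s_eps => v4 end.
Definition S_f (a : sarr) : sarr :=
  match a with s_alpha => s_xi | s_xi => s_delta | s_delta => s_alpha
  | s_beta => s_nu | s_nu => s_eta | s_eta => s_beta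
  | s_gamma => s_mu | s_mu => s_omega | s_omega => s_gamma
  | s_rho => s_eps | s_eps => s_sigma | s_sigma => s_rho end.
Definition S_weight (a : sarr) : nat := 1.
Definition S_param (K : fieldType) (lam : K) (a : sarr) : K :=
  match a with s_alpha | s_beta | s_gamma | s_sigma => lam | _ => 1 end.


Definition S_rels (K : fieldType) (lam : K) : seq (kq K vtx sarr) :=
  wsa_rels S_src S_f S_weight (S_param lam).

Inductive carr := c_alpha | c_beta | c_rho | c_omega | c_delta | c_sigma.

Definition carr_code (a : carr) : 'I_6 :=
  inord (match a with c_alpha => 0 | c_beta => 1 | c_rho => 2 | c_omega => 3
  | c_delta => 4 | c_sigma => 5 end)%N.
Definition carr_decode (i : 'I_6) : option carr :=
  match nat_of_ord i with 0 => Some c_alpha | 1 => Some c_beta | 2 => Some c_rho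
  | 3 => Some c_omega | 4 => Some c_delta | 5 => Some c_sigma | _ => None end%N.
Lemma carr_codeK : pcancel carr_code carr_decode.
Proof. by case; rewrite /carr_decode /carr_code /= inordK. Qed.
HB.instance Definition _ := Finite.copy carr (pcan_type carr_codeK).

Definition C_src (a : carr) : vtx :=
  match a with c_alpha => v1 | c_beta => v2 | c_rho => v1 | c_omega => v6
  | c_delta => v5 | c_sigma => v4 end.
Definition C_tgt (a : carr) : vtx :=
  match a with c_alpha => v2 | c_beta => v3 | c_rho => v6 | c_omega => v3
  | c_delta => v1 | c_sigma => v1 end.

Definition C_rels (K : fieldType) (lam : K) : seq (kq K vtx carr) :=
  [:: [:: (1, (v5, [:: c_delta; c_alpha; c_beta])); (-1, (v5, [:: c_delta; c_rho; c_omega]))];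
      [:: (1, (v4, [:: c_sigma; c_rho; c_omega])); (- lam, (v4, [:: c_sigma; c_alpha; c_beta]))]].

(* Main.v *)
Require Import Defs.
From HB Require Import structures.
From mathcomp Require Import all_boot all_order all_algebra.
From mathcomp Require Import boolp.
From mathcomp Require Import ring.
Set Implicit Arguments. Unset Strict Implicit. Unset Printing Implicit Defensive.
Import GRing.Theory.
Local Open Scope ring_scope.

Section Gen.
Variables (K : fieldType) (V A : finType) (s t : A -> V).

Definition good (B : algType K) (e : V -> B) (x : A -> B) :=
  [/\ forall v w, e v * e w = (if v == w then e v else 0),
      \sum_(v : V) e v = 1 &
      forall a, x a = e (s a) * x a * e (t a)].

Lemma is_qpath_cat (p q : qpath V A) : is_qpath s t p -> is_qpath s t q ->
  ptgt t p = psrc q -> is_qpath s t (p.1, p.2 ++ q.2).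
Proof.
case: p => v [|a w]; case: q => u [|b w']; rewrite /is_qpath /ptgt /psrc /= //.
- by move=> _ Hq ->.
- by rewrite cats0.
move=> /andP[-> Hp] /andP[/eqP Hb Hq] Ht /=.
rewrite cat_path Hp /= Hq andbT Hb -Ht.
by rewrite last_map.
Qed.

Lemma kq_valid_cat (f g : kq K V A) : kq_valid s t (f ++ g) = kq_valid s t f && kq_valid s t g.
Proof. by rewrite /kq_valid all_cat. Qed.

Lemma kq_valid_scale c (f : kq K V A) : kq_valid s t (kscale c f) = kq_valid s t f.
Proof. by rewrite /kq_valid /kscale all_map. Qed.

Lemma kq_valid_kmul (f g : kq K V A) : kq_valid s t f -> kq_valid s t g ->
  kq_valid s t (kmul t f g).
Proof.
move=> /allP Hf /allP Hg; apply/allP => z /flattenP[r /mapP[z1 z1f ->]].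
case/mapP => w; rewrite mem_filter => /andP[/eqP Ht wg] -> /=.
by apply: is_qpath_cat => //; [apply: Hf | apply: Hg].
Qed.

Section G.
Variables (B : algType K) (e : V -> B) (x : A -> B).
Hypothesis ge : good e x.

Definition W (w : seq A) : B := \prod_(a <- w) x a.

Lemma e_idem v : e v * e v = e v.
Proof. by case: ge => h _ _; rewrite h eqxx. Qed.
Lemma e_orth v w : v != w -> e v * e w = 0.
Proof. by case: ge => h _ _ H; rewrite h (negPf H). Qed.
Lemma x_l a : e (s a) * x a = x a.
Proof. by case: ge => _ _ h; rewrite h !mulrA e_idem. Qed.
Lemma x_r a : x a * e (t a) = x a.
Proof. by case: ge => _ _ h; rewrite h -!mulrA e_idem. Qed.

Lemma W_cons a w : W (a :: w) = x a * W w.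
Proof. by rewrite /W big_cons. Qed.
Lemma W_rcons a w : W (rcons w a) = W w * x a.
Proof. by rewrite /W -cats1 big_cat big_seq1. Qed.
Lemma W_cat w1 w2 : W (w1 ++ w2) = W w1 * W w2.
Proof. by rewrite /W big_cat. Qed.
Lemma W_nil : W [::] = 1.
Proof. by rewrite /W big_nil. Qed.

Lemma peval_r (p : qpath V A) : peval e x p * e (ptgt t p) = peval e x p.
Proof.
case: p => v w; case: w => [|a w]; rewrite /peval /=; first by rewrite /ptgt /= e_idem.
rewrite /ptgt /=; elim/last_ind: w a => [|w b IH] a /=.
  by rewrite big_seq1 x_r.
rewrite map_rcons last_rcons -rcons_cons.
by rewrite -cats1 big_cat big_seq1 /= -mulrA x_r.
Qed.

Lemma peval_l (p : qpath V A) : is_qpath s t p -> e (psrc p) * peval e x p = peval e x p.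
Proof.
case: p => v [|a w]; rewrite /peval /is_qpath /=; first by rewrite /psrc e_idem.
by move=> /andP[/eqP <- _]; rewrite /psrc big_cons mulrA x_l.
Qed.

Lemma peval_cat (p q : qpath V A) : is_qpath s t q -> ptgt t p = psrc q ->
  peval e x (p.1, p.2 ++ q.2) = peval e x p * peval e x q.
Proof.
case: p => v [|a w]; case: q => u [|b w']; rewrite /peval /is_qpath /ptgt /psrc /= //.
- by move=> _ <-; rewrite e_idem.
- by move=> /andP[/eqP Hb _] ->; rewrite big_cons mulrA -Hb x_l.
- by move=> _ <-; rewrite cats0; have := peval_r (v, a::w); rewrite /peval /ptgt /= => ->.
by move=> _ _; rewrite -cat_cons big_cat.
Qed.

Lemma peval_mism (p q : qpath V A) : is_qpath s t q -> ptgt t p != psrc q ->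
  peval e x p * peval e x q = 0.
Proof.
move=> Hq Hn; have H1 := peval_r p; have H2 := peval_l Hq.
rewrite -H1 -H2 mulrA -(mulrA (peval e x p)) e_orth //.
by rewrite mulr0 mul0r.
Qed.

Lemma keval_nil : keval e x ([::] : kq K V A) = 0.
Proof. by rewrite /keval big_nil. Qed.
Lemma keval_cons z (f : kq K V A) : keval e x (z :: f) = z.1 *: peval e x z.2 + keval e x f.
Proof. by rewrite /keval big_cons. Qed.
Lemma keval_cat (f g : kq K V A) : keval e x (f ++ g) = keval e x f + keval e x g.
Proof. by rewrite /keval big_cat. Qed.
Lemma keval_scale c (f : kq K V A) : keval e x (kscale c f) = c *: keval e x f.
Proof.
rewrite /keval /kscale big_map scaler_sumr; apply: eq_bigr => z _.
by rewrite scalerA.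
Qed.
Lemma keval_kpath (p : qpath V A) : keval e x (kpath K p) = peval e x p.
Proof. by rewrite /keval /kpath big_seq1 scale1r. Qed.
Lemma keval_flatten (fs : seq (kq K V A)) :
  keval e x (flatten fs) = \sum_(f <- fs) keval e x f.
Proof.
elim: fs => [|f fs IH]; first by rewrite big_nil keval_nil.
by rewrite /= keval_cat IH big_cons.
Qed.

Lemma keval_kmul (f g : kq K V A) : kq_valid s t g ->
  keval e x (kmul t f g) = keval e x f * keval e x g.
Proof.
move=> /allP Hg; rewrite /kmul keval_flatten big_map /keval mulr_suml.
apply: eq_bigr => z _; rewrite big_map big_filter mulr_sumr big_mkcond /=.
rewrite [RHS]big_seq [LHS]big_seq; apply: eq_bigr => w wg.
rewrite -scalerAl -scalerAr scalerA.
case: eqP => [H|/eqP H].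
  by rewrite peval_cat //; apply: Hg.
by rewrite peval_mism ?scaler0 //; apply: Hg.
Qed.

Lemma kcoef_cons (z : K * qpath V A) (f : kq K V A) q :
  kcoef (z :: f) q = (if z.2 == q then z.1 else 0) + kcoef f q.
Proof. by rewrite /kcoef big_cons; case: ifP => _; rewrite ?add0r. Qed.

Lemma keval_sum (f : kq K V A) (r : seq (qpath V A)) : uniq r ->
  {subset map snd f <= r} -> keval e x f = \sum_(q <- r) kcoef f q *: peval e x q.
Proof.
move=> ur; elim: f => [|z f IH] sub.
  rewrite keval_nil big1 // => q _; by rewrite /kcoef big_nil scale0r.
rewrite keval_cons IH; last by move=> q qf; apply: sub; rewrite inE qf orbT.
under [in RHS]eq_bigr => q _ do rewrite kcoef_cons scalerDl.
rewrite big_split /=; congr (_ + _).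
have zr : z.2 \in r by apply: sub; rewrite /= mem_head.
rewrite (bigD1_seq z.2) //= eqxx big1 ?addr0 // => q /negPf nq.
by rewrite eq_sym nq scale0r.
Qed.

Lemma keval_kcoef (f g : kq K V A) : (forall q, kcoef f q = kcoef g q) ->
  keval e x f = keval e x g.
Proof.
move=> H; set r := undup (map snd (f ++ g)).
have ur : uniq r by apply: undup_uniq.
rewrite (@keval_sum f r) ?(@keval_sum g r) //.
- by apply: eq_bigr => q _; rewrite H.
- by move=> q qg; rewrite mem_undup map_cat mem_cat qg orbT.
by move=> q qf; rewrite mem_undup map_cat mem_cat qf.
Qed.

Lemma ideal0 (R : seq (kq K V A)) (h : kq K V A) :
  (forall r, r \in R -> kq_valid s t r /\ keval e x r = 0) ->
  in_ideal s t R h -> keval e x h = 0.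
Proof.
move=> HR [l [/allP Hl Hc]]; rewrite (keval_kcoef Hc) keval_flatten big_map.
rewrite big_seq big1 // => z zl.
have /and3P[Hu Hr Hw] := Hl z zl.
have [Vr Kr] := HR _ Hr.
rewrite keval_scale keval_kmul /kq_valid /= ?Hw // keval_kmul //.
by rewrite Kr mulr0 mul0r scaler0.
Qed.

Lemma cl_ext (p : qpath V A) a : is_qpath s t p -> ptgt t p = s a ->
  peval e x p * x a = peval e x (p.1, rcons p.2 a).
Proof.
move=> Hp Ht; have Hq : is_qpath s t (s a, [:: a]) by rewrite /is_qpath /= eqxx.
have := peval_cat Hq Ht; rewrite cats1 => ->.
by rewrite /peval /= big_seq1.
Qed.

Lemma cl_mism (p : qpath V A) a : ptgt t p != s a -> peval e x p * x a = 0.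
Proof.
move=> Hn; have Hq : is_qpath s t (s a, [:: a]) by rewrite /is_qpath /= eqxx.
by have := peval_mism Hq Hn; rewrite /peval /= big_seq1.
Qed.

Lemma rel_eq2 v w1 w2 (c : K) :
  keval e x [:: (1, (v, w1)); (c, (v, w2))] = 0 -> w1 != [::] -> w2 != [::] ->
  W w1 = - c *: W w2.
Proof.
rewrite !keval_cons keval_nil addr0 scale1r.
case: w1 => // a1 w1; case: w2 => // a2 w2 H _ _.
by move/eqP: H; rewrite addr_eq0 => /eqP H; rewrite scaleNr -H.
Qed.

Lemma rel_eq1 v w : keval e x [:: (1, (v, w))] = 0 -> w != [::] -> W w = 0.
Proof.
by rewrite !keval_cons keval_nil addr0 scale1r; case: w.
Qed.

End G.

Lemma kmul_left (r : kq K V A) v :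
  (forall z, z \in r -> psrc z.2 = v) ->
  kmul t (kpath K (v, [::])) r = [seq (1 * w.1, w.2) | w <- r].
Proof.
move=> Hz; rewrite /kmul /kpath /= cats0.
rewrite (@eq_in_filter _ _ predT); last by move=> w /Hz Hs; rewrite /ptgt /= Hs eqxx.
rewrite filter_predT; apply/eq_in_map => w /Hz /=.
by case: w => c [v' p] /= ->.
Qed.

Lemma kmul_right (f : kq K V A) u :
  (forall z, z \in f -> ptgt t z.2 = u) ->
  kmul t f (kpath K (u, [::])) = [seq (w.1 * 1, w.2) | w <- f].
Proof.
move=> Hz; rewrite /kmul /kpath.
elim: f Hz => [|z f IH] Hz //=.
rewrite IH; last by move=> w wf; apply: Hz; rewrite inE wf orbT.
rewrite /psrc /= Hz ?mem_head // eqxx /= cats0.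
by case: z Hz => c [v' p].
Qed.

Lemma rel_in_ideal (R : seq (kq K V A)) (r : kq K V A) v u :
  r \in R -> (forall z, z \in r -> psrc z.2 = v /\ ptgt t z.2 = u) ->
  in_ideal s t R r.
Proof.
move=> Hr Hz; exists [:: (1, (v, [::]), r, (u, [::]))]; split.
  by rewrite /= Hr /is_qpath.
move=> q; congr kcoef; rewrite /= cats0.
rewrite kmul_left; last by move=> z /Hz [].
rewrite kmul_right; last by move=> z /mapP [w /Hz [_ H] ->].
rewrite /kscale -!map_comp -[LHS]map_id; apply: eq_map => w /=.
by rewrite mul1r mulr1 mul1r; case: w.
Qed.

Lemma present_hom (R : seq (kq K V A)) (B : algType K) (e : V -> B) (x : A -> B)
  (M : algType K) (e' : V -> M) (x' : A -> M) :
  good e x -> (forall b : B, exists f, kq_valid s t f /\ keval e x f = b) ->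
  (forall f, kq_valid s t f -> (keval e x f = 0 <-> in_ideal s t R f)) ->
  good e' x' -> (forall r, r \in R -> kq_valid s t r /\ keval e' x' r = 0) ->
  exists psi : B -> M,
    [/\ forall k u v, psi (k *: u + v) = k *: psi u + psi v,
        forall u v, psi (u * v) = psi u * psi v,
        psi 1 = 1 &
        forall f, kq_valid s t f -> psi (keval e x f) = keval e' x' f].
Proof.
move=> ge Hs Hk ge' HR.
pose psi b := keval e' x' (sval (cid (Hs b))).
have key f : kq_valid s t f -> psi (keval e x f) = keval e' x' f.
  move=> Vf; rewrite /psi; case: cid => g [Vg Eg] /=.
  have V1 : kq_valid s t (f ++ kscale (-1) g) by rewrite kq_valid_cat kq_valid_scale Vf.
  have : keval e x (f ++ kscale (-1) g) = 0.
    by rewrite keval_cat keval_scale Eg scaleN1r subrr.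
  move/(Hk _ V1)/(ideal0 ge' HR); rewrite keval_cat keval_scale scaleN1r.
  by move/eqP; rewrite subr_eq0 => /eqP.
exists psi; split => //.
- move=> k u v; case: (Hs u) => fu [Vu <-]; case: (Hs v) => fv [Vv <-].
  rewrite -keval_scale -keval_cat key ?kq_valid_cat ?kq_valid_scale ?Vu //.
  by rewrite keval_cat keval_scale !key.
- move=> u v; case: (Hs u) => fu [Vu <-]; case: (Hs v) => fv [Vv <-].
  rewrite -(keval_kmul ge) // key ?kq_valid_kmul //.
  by rewrite (keval_kmul ge') // !key.
- have E1 : (1 : B) = keval e x [seq (1, (v, [::])) | v <- enum V].
    case: ge => _ <- _; rewrite /keval big_map big_enum /=.
    by apply: eq_bigr => v _; rewrite scale1r.
  rewrite E1 key; last by rewrite /kq_valid all_map; apply/allP.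
  case: ge' => _ <- _; rewrite /keval big_map big_enum /=.
  by apply: eq_bigr => v _; rewrite scale1r.
Qed.

Lemma present_span (B : algType K) (e : V -> B) (x : A -> B) (n : nat)
  (bs : nat -> B) (iv : V -> nat) :
  good e x -> (forall b : B, exists f, kq_valid s t f /\ keval e x f = b) ->
  (forall v, (iv v < n)%N) -> (forall v, e v = bs (iv v)) ->
  (forall i a, (i < n)%N -> exists j c, (j < n)%N /\ bs i * x a = c *: bs j) ->
  forall u : B, exists c : nat -> K, u = \sum_(i < n) c i *: bs i.
Proof.
move=> ge Hs Hiv He Hcl.
pose spn (u : B) := exists c : nat -> K, u = \sum_(i < n) c i *: bs i.
have spn0 : spn 0 by exists (fun _ => 0); rewrite big1 // => i _; rewrite scale0r.
have spnD u v : spn u -> spn v -> spn (u + v).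
  move=> [c ->] [d ->]; exists (fun i => c i + d i).
  by rewrite -big_split /=; apply: eq_bigr => i _; rewrite scalerDl.
have spnZ k u : spn u -> spn (k *: u).
  move=> [c ->]; exists (fun i => k * c i).
  by rewrite scaler_sumr; apply: eq_bigr => i _; rewrite scalerA.
have spnB j c : (j < n)%N -> spn (c *: bs j).
  move=> jn; exists (fun i => if i == j then c else 0).
  rewrite (bigD1 (Ordinal jn)) //= eqxx big1 ?addr0 // => i /eqP Hi.
  case: eqP => [Hij|]; last by rewrite scale0r.
  by case: Hi; apply: val_inj.
have spnS (F : 'I_n -> B) : (forall i, spn (F i)) -> spn (\sum_(i < n) F i).
  by move=> HF; apply: (big_ind spn) => //; apply: spnD.
have spnX u a : spn u -> spn (u * x a).
  move=> [c ->]; rewrite mulr_suml; apply: spnS => i.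
  have [j [d [jn Hj]]] := Hcl i a (ltn_ord i).
  by rewrite -scalerAl Hj; apply: spnZ; apply: spnB.
have spnW v w : spn (e v * W x w).
  elim/last_ind: w => [|w a IH].
    by rewrite W_nil mulr1 He -[bs _]scale1r; apply: spnB.
  by rewrite W_rcons mulrA; apply: spnX.
have spnP p : is_qpath s t p -> spn (peval e x p).
  move=> Hp; rewrite -(peval_l ge Hp); case: p Hp => v [|a w] _; rewrite /peval /psrc /=.
    by rewrite (e_idem ge); have := spnW v [::]; rewrite W_nil mulr1.
  exact: spnW.
move=> u; have [f [Vf <-]] := Hs u.
elim: f Vf => [|z f IH] /=; first by rewrite keval_nil.
by move=> /andP[Hz Vf]; rewrite keval_cons; apply: spnD; [apply: spnZ; apply: spnP|apply: IH].
Qed.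

End Gen.

Definition vtx_num (v : vtx) : nat :=
  match v with v1 => 0 | v2 => 1 | v3 => 2 | v4 => 3 | v5 => 4 | v6 => 5 end.
Definition vtx_eqb (x y : vtx) := (vtx_num x == vtx_num y)%N.
Lemma vtx_eqE (x y : vtx) : (x == y) = vtx_eqb x y.
Proof. by apply/eqP/idP => [->|]; [rewrite /vtx_eqb eqxx | case: x; case: y]. Qed.
Definition carr_num (v : carr) : nat :=
  match v with c_alpha => 0 | c_beta => 1 | c_rho => 2 | c_omega => 3 | c_delta => 4 | c_sigma => 5 end.
Definition carr_eqb (x y : carr) := (carr_num x == carr_num y)%N.
Lemma carr_eqE (x y : carr) : (x == y) = carr_eqb x y.
Proof. by apply/eqP/idP => [->|]; [rewrite /carr_eqb eqxx | case: x; case: y]. Qed.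
Definition sarr_num (v : sarr) : nat :=
  match v with s_alpha => 0 | s_beta => 1 | s_gamma => 2 | s_sigma => 3
  | s_rho => 4 | s_omega => 5 | s_nu => 6 | s_delta => 7 | s_xi => 8 | s_eta => 9
  | s_mu => 10 | s_eps => 11 end.
Definition sarr_eqb (x y : sarr) := (sarr_num x == sarr_num y)%N.
Lemma sarr_eqE (x y : sarr) : (x == y) = sarr_eqb x y.
Proof. by apply/eqP/idP => [->|]; [rewrite /sarr_eqb eqxx | case: x; case: y]. Qed.

Definition cbl : seq (qpath vtx carr) := [:: (v1, [:: ]);
  (v2, [:: ]);
  (v3, [:: ]);
  (v4, [:: ]);
  (v5, [:: ]);
  (v6, [:: ]);
  (v1, [:: c_alpha]);
  (v2, [:: c_beta]);
  (v1, [:: c_rho]);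
  (v6, [:: c_omega]);
  (v5, [:: c_delta]);
  (v4, [:: c_sigma]);
  (v1, [:: c_alpha; c_beta]);
  (v1, [:: c_rho; c_omega]);
  (v5, [:: c_delta; c_alpha]);
  (v5, [:: c_delta; c_rho]);
  (v4, [:: c_sigma; c_alpha]);
  (v4, [:: c_sigma; c_rho]);
  (v5, [:: c_delta; c_alpha; c_beta]);
  (v4, [:: c_sigma; c_alpha; c_beta])].
Definition ctab (i : nat) (a : carr) : option (nat * nat) :=
  match a with
  | c_alpha => match i with
  | 0 => Some (6, 0)
  | 10 => Some (14, 0)
  | 11 => Some (16, 0)
  | _ => None end
  | c_beta => match i with
  | 1 => Some (7, 0)
  | 6 => Some (12, 0)
  | 14 => Some (18, 0)
  | 16 => Some (19, 0)
  | _ => None end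
  | c_rho => match i with
  | 0 => Some (8, 0)
  | 10 => Some (15, 0)
  | 11 => Some (17, 0)
  | _ => None end
  | c_omega => match i with
  | 5 => Some (9, 0)
  | 8 => Some (13, 0)
  | 15 => Some (18, 0)
  | 17 => Some (19, 1)
  | _ => None end
  | c_delta => match i with
  | 4 => Some (10, 0)
  | _ => None end
  | c_sigma => match i with
  | 3 => Some (11, 0)
  | _ => None end
  end%N.

Definition cb (i : nat) : qpath vtx carr := nth (v1, [::]) cbl i.
Definition ctg (i : nat) : vtx := ptgt C_tgt (cb i).

Inductive cg := CV of vtx | CA of carr.

Definition edata (v : vtx) (i : nat) : option (nat * nat) :=
  if (i < 20)%N && vtx_eqb (ctg i) v then Some (i, 0%N) else None.
Definition gd (g : cg) : nat -> option (nat * nat) :=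
  match g with CV v => edata v | CA a => fun i => ctab i a end.

Definition step (m : nat -> option (nat * nat)) (st : option (nat * nat)) :=
  if st is Some (j, k) then (if m j is Some (j', k') then Some (j', (k' + k)%N) else None)
  else None.
Definition run (w : seq cg) (st : option (nat * nat)) :=
  foldl (fun st g => step (gd g) st) st w.
Definition shift (c : nat) (st : option (nat * nat)) :=
  if st is Some (j, k) then Some (j, (k + c)%N) else None.

Definition cbw (i : nat) : seq cg :=
  if (cb i).2 is [::] then [:: CV (cb i).1] else map CA (cb i).2.

(* exponent list of coordinate j of 1 * w *)
Definition dlist (j : nat) (w : seq cg) : seq nat :=
  flatten [seq (if run w (Some (i, 0%N)) is Some (j', k) then
                  (if j' == j then [:: k] else [::]) else [::]) | i <- iota 0 6].

Definition bnd (st : option (nat * nat)) := if st is Some (j, _) then (j < 20)%N else true.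

Lemma gd_bnd g i : bnd (gd g i).
Proof.
case: g => [v|a] /=; first by rewrite /edata; case: ifP => // /andP[].
by case: a; do 20 (case: i => [|i] //).
Qed.

Lemma run_bnd w st : bnd st -> bnd (run w st).
Proof.
elim: w st => [|g w IH] st //= Hs; apply: IH.
by case: st Hs => [[j k]|] //= _; have := gd_bnd g j; case: (gd g j) => [[j' k']|].
Qed.

Section Model.
Variables (K : fieldType) (lam : K).

Definition mxd (m : nat -> option (nat * nat)) : 'M[K]_20 :=
  \matrix_(i, j) (if m i is Some (j', k) then (if j' == j then lam ^+ k else 0) else 0).
Definition rowst (st : option (nat * nat)) : 'rV[K]_20 :=
  if st is Some (j, k) then lam ^+ k *: delta_mx 0 (inord j) else 0.
Definition mxw (w : seq cg) : 'M[K]_20 := \prod_(g <- w) mxd (gd g).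

Lemma mxwE w : mxw w = \prod_(g <- w) mxd (gd g).
Proof. by []. Qed.

Lemma rowst_mul g st : bnd st -> rowst st *m mxd (gd g) = rowst (step (gd g) st).
Proof.
case: st => [[j k]|] /= Hj; last by rewrite mul0mx.
rewrite -scalemxAl -rowE; apply/rowP => c; rewrite !mxE inordK //.
have := gd_bnd g j; case: (gd g j) => [[j' k'] /= Hj'|_]; last by rewrite mxE mulr0.
rewrite !mxE /= exprD.
have -> : (c == inord j' :> 'I_20) = (j' == c).
  apply/eqP/eqP => [->|E]; first by rewrite inordK.
  by apply: val_inj; rewrite /= inordK // E.
by case: eqP => _; rewrite ?mulr1 ?mulr0 // mulrC.
Qed.

Lemma rowst_run w st : bnd st -> rowst st *m mxw w = rowst (run w st).
Proof.
elim: w st => [|g w IH] st Hs /=; first by rewrite /mxw big_nil mulmx1.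
rewrite /mxw big_cons -mulmxE mulmxA rowst_mul // IH //.
by case: st Hs => [[j k]|] //= _; have := gd_bnd g j; case: (gd g j) => [[j' k']|].
Qed.

Lemma mxw_cat w1 w2 : mxw (w1 ++ w2) = mxw w1 * mxw w2.
Proof. by rewrite /mxw big_cat. Qed.

Lemma row_ext (M1 M2 : 'M[K]_20) :
  (forall i, (i < 20)%N -> rowst (Some (i, 0%N)) *m M1 = rowst (Some (i, 0%N)) *m M2) ->
  M1 = M2.
Proof.
move=> H; apply/row_matrixP => i; rewrite !rowE.
by have := H i (ltn_ord i); rewrite /rowst expr0 !scale1r inord_val.
Qed.

Lemma all_iota_lt (P : pred nat) n : all P (iota 0 n) -> forall i, (i < n)%N -> P i.
Proof. by move=> /allP H i Hi; apply: H; rewrite mem_iota. Qed.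

Lemma rowst_shift c st : rowst (shift c st) = lam ^+ c *: rowst st.
Proof. by case: st => [[j k]|] /=; rewrite ?scaler0 // scalerA exprD mulrC. Qed.

Lemma mxw_eq w1 w2 c :
  all (fun i => run w1 (Some (i, 0%N)) == shift c (run w2 (Some (i, 0%N)))) (iota 0 20) ->
  mxw w1 = lam ^+ c *: mxw w2.
Proof.
move=> H; apply: row_ext => i Hi; rewrite -scalemxAr !rowst_run //.
by rewrite (eqP (all_iota_lt H Hi)) rowst_shift.
Qed.

Lemma mxw_eq0 w :
  all (fun i => run w (Some (i, 0%N)) == None) (iota 0 20) -> mxw w = 0.
Proof.
move=> H; apply: row_ext => i Hi; rewrite mulmx0 rowst_run //.
by rewrite (eqP (all_iota_lt H Hi)).
Qed.

End Model.

Section ModelGood.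
Variables (K : fieldType) (lam : K).
Local Notation mxw := (mxw lam).
Local Notation mxd := (mxd lam).
Definition eM (v : vtx) : 'M[K]_20 := mxd (gd (CV v)).
Definition xM (a : carr) : 'M[K]_20 := mxd (gd (CA a)).

Lemma mxw1 g : mxw [:: g] = mxd (gd g).
Proof. by rewrite mxwE big_seq1. Qed.

Lemma mxw_eq1 w1 w2 :
  all (fun i => run w1 (Some (i, 0%N)) == run w2 (Some (i, 0%N))) (iota 0 20) ->
  mxw w1 = mxw w2.
Proof.
move=> H; rewrite -[mxw w2]scale1r -(expr0 lam); apply: mxw_eq.
by apply: sub_all H => i /eqP ->; case: (run w2 _) => [[j k]|] //=; rewrite addn0.
Qed.

Lemma prodM_map (w : seq carr) : \prod_(a <- w) xM a = mxw (map CA w).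
Proof. by rewrite mxwE big_map. Qed.

Lemma model_good : good C_src C_tgt eM xM.
Proof.
split.
- move=> v w; rewrite /eM -!mxw1 -mxw_cat /= vtx_eqE.
  by case: v; case: w => /=; (apply: mxw_eq1 || apply: mxw_eq0); vm_compute.
- apply: (row_ext (lam := lam)) => i Hi; rewrite mulmx1 mulmx_sumr.
  under eq_bigr => v _ do rewrite /eM -mxw1 rowst_run //.
  rewrite (bigD1 (ctg i)) //= big1 ?addr0.
    by rewrite /edata Hi /vtx_eqb eqxx.
  move=> v; rewrite eq_sym vtx_eqE /= /edata Hi /= => /negPf -> //.
- move=> a; rewrite /eM /xM -!mxw1 -!mxw_cat /=.
  by case: a; apply: mxw_eq1; vm_compute.
Qed.

Lemma model_rels (r : kq K vtx carr) : r \in C_rels lam ->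
  kq_valid C_src C_tgt r /\ keval eM xM r = 0.
Proof.
rewrite /C_rels !inE => /orP[] /eqP ->; split.
- by rewrite /kq_valid /= /is_qpath /= ?eqxx.
- rewrite !keval_cons keval_nil /peval /= !prodM_map /=.
  rewrite (@mxw_eq1 [:: CA c_delta; CA c_alpha; CA c_beta] [:: CA c_delta; CA c_rho; CA c_omega]) //.
  by rewrite scale1r scaleN1r addr0 subrr.
- by rewrite /kq_valid /= /is_qpath /= ?eqxx.
- rewrite !keval_cons keval_nil /peval /= !prodM_map /=.
  rewrite (@mxw_eq _ lam [:: CA c_sigma; CA c_rho; CA c_omega] [:: CA c_sigma; CA c_alpha; CA c_beta] 1) //.
  by rewrite scale1r expr1 addr0 scaleNr subrr.
Qed.
End ModelGood.

Section TCdef.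
Variables (K : fieldType) (C : algType K).

Definition lfb (h : C -> K) : bool := `[< lin_functional h >].

Lemma lfbP h : reflect (lin_functional h) (lfb h).
Proof. exact: asboolP. Qed.

Section LinFacts.
Variable h : C -> K.
Hypothesis hl : lin_functional h.
Lemma lf_add u v : h (u + v) = h u + h v.
Proof. by have := hl 1 u v; rewrite scale1r mul1r. Qed.
Lemma lf_0 : h 0 = 0.
Proof. by have := lf_add 0 0; rewrite addr0 => H; apply: (addrI (h 0)); rewrite addr0 -H. Qed.
Lemma lf_scale k u : h (k *: u) = k * h u.
Proof. by have := hl k u 0; rewrite !addr0 lf_0 addr0. Qed.
End LinFacts.

Record TC := MkTC { tcv : C * (C -> K); tcvP : lfb tcv.2 }.
HB.instance Definition _ := [isSub for tcv].
HB.instance Definition _ := [Choice of TC by <:].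

Lemma tc_eq (p q : TC) : (tcv p).1 = (tcv q).1 -> (tcv p).2 =1 (tcv q).2 -> p = q.
Proof.
move=> H1 H2; apply: val_inj => /=; case: (tcv p) H1 H2 => a f; case: (tcv q) => b g /= -> H.
by congr pair; apply: funext.
Qed.

Lemma tl (p : TC) : lin_functional (tcv p).2.
Proof. by apply/lfbP; apply: tcvP. Qed.

Lemma lin0 : lfb (fun _ : C => 0).
Proof. by apply/lfbP => k u v; rewrite mulr0 addr0. Qed.
Definition tzero := @MkTC (0, fun _ => 0) lin0.

Lemma linN (p : TC) : lfb (fun u => - (tcv p).2 u).
Proof. by apply/lfbP => k u v; rewrite (tl p) opprD mulrN. Qed.
Definition topp (p : TC) := @MkTC (- (tcv p).1, fun u => - (tcv p).2 u) (linN p).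

Lemma linD (p q : TC) : lfb (fun u => (tcv p).2 u + (tcv q).2 u).
Proof. by apply/lfbP => k u v; rewrite (tl p) (tl q) mulrDr addrACA. Qed.
Definition tadd (p q : TC) := @MkTC ((tcv p).1 + (tcv q).1, fun u => (tcv p).2 u + (tcv q).2 u) (linD p q).

Lemma tc_addA : associative tadd.
Proof. by move=> p q r; apply: tc_eq => [|u] /=; rewrite addrA. Qed.
Lemma tc_addC : commutative tadd.
Proof. by move=> p q; apply: tc_eq => [|u] /=; rewrite addrC. Qed.
Lemma tc_add0 : left_id tzero tadd.
Proof. by move=> p; apply: tc_eq => [|u] /=; rewrite add0r. Qed.
Lemma tc_addN : left_inverse tzero topp tadd.
Proof. by move=> p; apply: tc_eq => [|u] /=; rewrite addNr. Qed.

HB.instance Definition _ := GRing.isZmodule.Build TC tc_addA tc_addC tc_add0 tc_addN.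

Definition tone := @MkTC (1, fun _ => 0) lin0.
Lemma linM (p q : TC) : lfb (te_mul (tcv p) (tcv q)).2.
Proof.
apply/lfbP => k u v /=.
rewrite mulrDl -scalerAl (tl q) mulrDr -scalerAr (tl p).
by rewrite mulrDr addrACA.
Qed.
Definition tmul (p q : TC) := @MkTC (te_mul (tcv p) (tcv q)) (linM p q).

Lemma tc_mulA : associative tmul.
Proof.
move=> p q r; apply: tc_eq => [|u] /=; first by rewrite mulrA.
by rewrite !mulrA addrA.
Qed.
Lemma tc_mul1 : left_id tone tmul.
Proof. by move=> p; apply: tc_eq => [|u] /=; rewrite ?mul1r // mulr1 addr0. Qed.
Lemma tc_mulr1 : right_id tone tmul.
Proof. by move=> p; apply: tc_eq => [|u] /=; rewrite ?mulr1 // mul1r add0r. Qed.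
Lemma tc_mulDl : left_distributive tmul tadd.
Proof.
move=> p q r; apply: tc_eq => [|u] /=; first by rewrite mulrDl.
by rewrite mulrDr (lf_add (tl r)) addrACA.
Qed.
Lemma tc_mulDr : right_distributive tmul tadd.
Proof.
move=> p q r; apply: tc_eq => [|u] /=; first by rewrite mulrDr.
by rewrite mulrDl (lf_add (tl p)) addrACA.
Qed.
Lemma tc_one_neq0 : tone != tzero.
Proof. by apply/eqP => /(congr1 (fun p => (tcv p).1)) /= /eqP; rewrite oner_eq0. Qed.

HB.instance Definition _ := GRing.Zmodule_isNzRing.Build TC tc_mulA tc_mul1 tc_mulr1 tc_mulDl tc_mulDr tc_one_neq0.

Lemma linZ k (p : TC) : lfb (fun u => k * (tcv p).2 u).
Proof. by apply/lfbP => c u v /=; rewrite (tl p) mulrDr mulrCA. Qed.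
Definition tscale k (p : TC) := @MkTC (k *: (tcv p).1, fun u => k * (tcv p).2 u) (linZ k p).

Lemma tc_scaleA a b p : tscale a (tscale b p) = tscale (a * b) p.
Proof. by apply: tc_eq => [|u] /=; rewrite ?scalerA ?mulrA. Qed.
Lemma tc_scale1 : left_id 1 tscale.
Proof. by move=> p; apply: tc_eq => [|u] /=; rewrite ?scale1r ?mul1r. Qed.
Lemma tc_scaleDr : right_distributive tscale tadd.
Proof. by move=> a p q; apply: tc_eq => [|u] /=; rewrite ?scalerDr ?mulrDr. Qed.
Lemma tc_scaleDl p : {morph tscale^~ p : a b / a + b >-> tadd a b}.
Proof. by move=> a b; apply: tc_eq => [|u] /=; rewrite ?scalerDl ?mulrDl. Qed.

HB.instance Definition _ := GRing.Zmodule_isLmodule.Build K TC tc_scaleA tc_scale1 tc_scaleDr tc_scaleDl.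

Lemma tc_scaleAl (a : K) (p q : TC) : a *: (p * q) = (a *: p) * q.
Proof.
apply: tc_eq => [|u] /=; first by rewrite scalerAl.
by rewrite mulrDr -scalerAr (lf_scale (tl q)).
Qed.
HB.instance Definition _ := GRing.Lmodule_isLalgebra.Build K TC tc_scaleAl.

Lemma tc_scaleAr (a : K) (p q : TC) : a *: (p * q) = p * (a *: q).
Proof.
apply: tc_eq => [|u] /=; first by rewrite scalerAr.
by rewrite mulrDr -scalerAl (lf_scale (tl p)).
Qed.
HB.instance Definition _ := GRing.Lalgebra_isAlgebra.Build K TC tc_scaleAr.

End TCdef.

Definition Sbar (a : sarr) : sarr :=
  match a with s_alpha => s_rho | s_rho => s_alpha | s_beta => s_xi | s_xi => s_beta
  | s_gamma => s_nu | s_nu => s_gamma | s_sigma => s_mu | s_mu => s_sigma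
  | s_delta => s_eta | s_eta => s_delta | s_omega => s_eps | s_eps => s_omega end.
Definition Sg (a : sarr) : sarr := Sbar (S_f a).
Definition Snorb (a : sarr) : nat :=
  match a with s_xi | s_eta | s_mu | s_eps => 2 | _ => 4 end.
Definition Sorb (a : sarr) : seq sarr := traject Sg a (Snorb a).

Lemma bar_ok : bar S_src = Sbar.
Proof.
apply: funext => a; rewrite /bar; case: pickP => [b /andP[]|H] /=.
  by rewrite vtx_eqE sarr_eqE; case: a; case: b.
by move: H => /(_ (Sbar a)); rewrite /= vtx_eqE sarr_eqE; case: a.
Qed.

Lemma gperm_ok : gperm S_src S_f = Sg.
Proof. by apply: funext => a; rewrite /gperm /Sg bar_ok. Qed.

Lemma Sorb_cyc a : fcycle Sg (Sorb a).
Proof. by case: a; rewrite /= !sarr_eqE. Qed.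
Lemma Sorb_uniq a : uniq (Sorb a).
Proof. by case: a; rewrite /= !inE !sarr_eqE. Qed.
Lemma Sorb_mem a : a \in Sorb a.
Proof. by case: a; rewrite /= inE eqxx. Qed.

Lemma norb_ok : norb S_src S_f = Snorb.
Proof.
apply: funext => a; rewrite /norb gperm_ok.
by rewrite (order_cycle (Sorb_cyc a) (Sorb_uniq a) (Sorb_mem a)) size_traject.
Qed.

Definition SApath (b : sarr) : qpath vtx sarr :=
  (S_src b, [seq iter k Sg b | k <- iota 0 (S_weight b * Snorb b).-1]).
Definition Svirt (b : sarr) : bool := (S_weight b * Snorb b == 2)%N.

Definition SFx (K : fieldType) (lam : K) (a : sarr) : seq (kq K vtx sarr) :=
  [:: (1, (S_src a, [:: a; S_f a])) :: kscale (- S_param lam (Sbar a)) (kpath K (SApath (Sbar a)))] ++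
  (if Svirt (S_f (S_f a)) then [::] else [:: kpath K (S_src a, [:: a; S_f a; Sg (S_f a)])]) ++
  (if Svirt (S_f a) then [::] else [:: kpath K (S_src a, [:: a; Sg a; S_f (Sg a)])]).

Lemma S_rels_eq (K : fieldType) (lam : K) :
  S_rels lam = flatten [seq SFx lam a | a <- enum (Finite.clone sarr _)].
Proof.
rewrite /S_rels /wsa_rels; congr flatten; apply: eq_map => a.
rewrite /SFx /Apath /virtual gperm_ok norb_ok bar_ok.
by [].
Qed.

Lemma S_rels_mem (K : fieldType) (lam : K) r :
  r \in S_rels lam <-> exists a, r \in SFx lam a.
Proof.
rewrite S_rels_eq; split.
  by case/flatten_mapP => a _ Hr; exists a.
by case=> a Hr; apply/flatten_mapP; exists a; rewrite ?mem_enum.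
Qed.

Ltac qp := rewrite /is_qpath /= ?eqxx.
Ltac vq := rewrite /kq_valid /kscale /kpath /= /is_qpath /= ?eqxx.

Lemma rel_eq2' (K : fieldType) (V A : finType) (B : algType K) (e : V -> B) (x : A -> B)
   v v' w1 w2 (c : K) :
  keval e x [:: (1, (v, w1)); (c, (v', w2))] = 0 -> w1 != [::] -> w2 != [::] ->
  W x w1 = - c *: W x w2.
Proof.
rewrite !keval_cons keval_nil addr0 scale1r.
case: w1 => // a1 w1; case: w2 => // a2 w2 H _ _.
by move/eqP: H; rewrite addr_eq0 => /eqP H; rewrite scaleNr -H.
Qed.

Section SMain.
Variables (K : fieldType) (lam : K).
Hypothesis lam0 : lam != 0.
Variables (S : algType K) (eS : vtx -> S) (xS : sarr -> S).
Hypothesis geS : good S_src S_tgt eS xS.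
Hypothesis surjS : forall b, exists f, kq_valid S_src S_tgt f /\ keval eS xS f = b.
Hypothesis kerS : forall f, kq_valid S_src S_tgt f ->
  (keval eS xS f = 0 <-> in_ideal S_src S_tgt (S_rels lam) f).

Lemma relS (r : kq K vtx sarr) v u : r \in S_rels lam ->
  kq_valid S_src S_tgt r ->
  (forall z, z \in r -> psrc z.2 = v /\ ptgt S_tgt z.2 = u) ->
  keval eS xS r = 0.
Proof. by move=> Hr Vr Hz; apply/(kerS Vr)/rel_in_ideal; eauto. Qed.

Lemma relS1 a : W xS [:: a; S_f a] = S_param lam (Sbar a) *: W xS (SApath (Sbar a)).2.
Proof.
have Hn : (SApath (Sbar a)).2 != [::] by case: a.
have H : keval eS xS ((1, (S_src a, [:: a; S_f a])) :: kscale (- S_param lam (Sbar a)) (kpath K (SApath (Sbar a)))) = 0.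
  apply: (@relS _ (S_src a) (S_tgt (S_f a))).
  - by apply/S_rels_mem; exists a; rewrite /SFx mem_cat mem_head.
  - by clear Hn; case: a; vq.
  - by move=> z; rewrite /kscale /kpath /= !inE => /orP[] /eqP ->; clear Hn; case: a.
by move: H => /rel_eq2' /(_ isT Hn) ->; rewrite mulr1 opprK.
Qed.

Lemma relZ1 a : ~~ Svirt (S_f (S_f a)) -> W xS [:: a; S_f a; Sg (S_f a)] = 0.
Proof.
move=> Hv.
have H : keval eS xS (kpath K (S_src a, [:: a; S_f a; Sg (S_f a)])) = 0.
  apply: (@relS _ (S_src a) (S_tgt (Sg (S_f a)))).
  - by apply/S_rels_mem; exists a; rewrite /SFx mem_cat (negPf Hv) /= mem_head orbT.
  - by clear Hv; case: a; vq.
  - by move=> z; rewrite /kpath !inE => /eqP ->; clear Hv; case: a.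
by move: H => /rel_eq1 H; apply: H.
Qed.

Lemma relZ2 a : ~~ Svirt (S_f a) -> W xS [:: a; Sg a; S_f (Sg a)] = 0.
Proof.
move=> Hv.
have H : keval eS xS (kpath K (S_src a, [:: a; Sg a; S_f (Sg a)])) = 0.
  apply: (@relS _ (S_src a) (S_tgt (S_f (Sg a)))).
  - apply/S_rels_mem; exists a; rewrite /SFx !mem_cat (negPf Hv) /=.
    by rewrite !inE eqxx !orbT.
  - by clear Hv; case: a; vq.
  - by move=> z; rewrite /kpath !inE => /eqP ->; clear Hv; case: a.
by move: H => /rel_eq1 H; apply: H.
Qed.

Lemma Sparam0 a : S_param lam a != 0.
Proof. by case: a => //=; rewrite oner_eq0. Qed.

Lemma stepF u v a : W xS (u ++ [:: a; S_f a] ++ v) =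
  S_param lam (Sbar a) *: W xS (u ++ (SApath (Sbar a)).2 ++ v).
Proof. by rewrite !W_cat relS1 -scalerAl -scalerAr. Qed.

Lemma stepB u v a : W xS (u ++ (SApath (Sbar a)).2 ++ v) =
  (S_param lam (Sbar a))^-1 *: W xS (u ++ [:: a; S_f a] ++ v).
Proof. by rewrite stepF scalerA mulVf ?scale1r // Sparam0. Qed.

Lemma stepZ1 u v a : ~~ Svirt (S_f (S_f a)) -> W xS (u ++ [:: a; S_f a; Sg (S_f a)] ++ v) = 0.
Proof. by move=> H; rewrite !W_cat relZ1 // mul0r mulr0. Qed.
Lemma stepZ2 u v a : ~~ Svirt (S_f a) -> W xS (u ++ [:: a; Sg a; S_f (Sg a)] ++ v) = 0.
Proof. by move=> H; rewrite !W_cat relZ2 // mul0r mulr0. Qed.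

Definition srepl : seq (qpath vtx sarr) := [:: (v1, [:: ]);
  (v2, [:: ]);
  (v3, [:: ]);
  (v4, [:: ]);
  (v5, [:: ]);
  (v6, [:: ]);
  (v1, [:: s_alpha]);
  (v2, [:: s_beta]);
  (v3, [:: s_gamma]);
  (v4, [:: s_sigma]);
  (v1, [:: s_rho]);
  (v6, [:: s_omega]);
  (v3, [:: s_nu]);
  (v5, [:: s_delta]);
  (v2, [:: s_xi]);
  (v5, [:: s_eta]);
  (v4, [:: s_mu]);
  (v6, [:: s_eps]);
  (v1, [:: s_alpha; s_beta]);
  (v1, [:: s_alpha; s_beta; s_gamma]);
  (v2, [:: s_beta; s_gamma]);
  (v2, [:: s_beta; s_gamma; s_sigma]);
  (v3, [:: s_gamma; s_sigma]);
  (v3, [:: s_gamma; s_sigma; s_alpha]);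
  (v4, [:: s_sigma; s_alpha]);
  (v4, [:: s_sigma; s_alpha; s_beta]);
  (v1, [:: s_rho; s_omega]);
  (v1, [:: s_rho; s_omega; s_nu]);
  (v6, [:: s_omega; s_nu]);
  (v6, [:: s_omega; s_nu; s_delta]);
  (v3, [:: s_nu; s_delta]);
  (v3, [:: s_nu; s_delta; s_rho]);
  (v5, [:: s_delta; s_rho]);
  (v5, [:: s_delta; s_rho; s_omega]);
  (v1, [:: s_alpha; s_beta; s_gamma; s_sigma]);
  (v2, [:: s_beta; s_gamma; s_sigma; s_alpha]);
  (v3, [:: s_gamma; s_sigma; s_alpha; s_beta]);
  (v4, [:: s_sigma; s_alpha; s_beta; s_gamma]);
  (v5, [:: s_delta; s_rho; s_omega; s_nu]);
  (v6, [:: s_omega; s_nu; s_delta; s_rho])].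

Definition stab (i : nat) (a : sarr) : option (nat * nat) :=
  match a with
  | s_alpha => match i with
  | 0 => Some (6, 0)
  | 9 => Some (24, 0)
  | 13 => Some (15, 0)
  | 21 => Some (35, 0)
  | 22 => Some (23, 0)
  | 30 => Some (23, 1)
  | _ => None end
  | s_beta => match i with
  | 1 => Some (7, 0)
  | 6 => Some (18, 0)
  | 15 => Some (33, 0)
  | 23 => Some (36, 0)
  | 24 => Some (25, 0)
  | _ => None end
  | s_gamma => match i with
  | 2 => Some (8, 0)
  | 7 => Some (20, 0)
  | 11 => Some (17, 0)
  | 18 => Some (19, 0)
  | 25 => Some (37, 0)
  | 26 => Some (19, 1)
  | _ => None end
  | s_sigma => match i with
  | 3 => Some (9, 0)
  | 8 => Some (22, 0)
  | 17 => Some (29, 0)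
  | 19 => Some (34, 0)
  | 20 => Some (21, 0)
  | _ => None end
  | s_rho => match i with
  | 0 => Some (10, 0)
  | 9 => Some (16, 0)
  | 13 => Some (32, 0)
  | 22 => Some (31, 0)
  | 29 => Some (39, 0)
  | 30 => Some (31, 0)
  | _ => None end
  | s_omega => match i with
  | 5 => Some (11, 0)
  | 10 => Some (26, 0)
  | 16 => Some (25, 1)
  | 31 => Some (36, 1)
  | 32 => Some (33, 0)
  | _ => None end
  | s_nu => match i with
  | 2 => Some (12, 0)
  | 7 => Some (14, 0)
  | 11 => Some (28, 0)
  | 18 => Some (27, 0)
  | 26 => Some (27, 0)
  | 33 => Some (38, 0)
  | _ => None end
  | s_delta => match i with
  | 4 => Some (13, 0)
  | 12 => Some (30, 0)
  | 14 => Some (21, 1)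
  | 27 => Some (34, 1)
  | 28 => Some (29, 0)
  | _ => None end
  | s_xi => match i with
  | 1 => Some (14, 0)
  | 6 => Some (27, 0)
  | 15 => Some (38, 0)
  | _ => None end
  | s_eta => match i with
  | 4 => Some (15, 0)
  | 12 => Some (23, 1)
  | 14 => Some (35, 1)
  | _ => None end
  | s_mu => match i with
  | 3 => Some (16, 0)
  | 8 => Some (31, 0)
  | 17 => Some (39, 0)
  | _ => None end
  | s_eps => match i with
  | 5 => Some (17, 0)
  | 10 => Some (19, 1)
  | 16 => Some (37, 1)
  | _ => None end
  end%N.

Definition srep (i : nat) : qpath vtx sarr := nth (v1, [::]) srepl i.
Definition sbe (i : nat) : S := peval eS xS (srep i).
Arguments sbe : simpl never.
Definition tvS (o : option (nat * nat)) : S := if o is Some (j, k) then lam ^+ k *: sbe j else 0.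


Lemma cl_6_xi : sbe 6 * xS s_xi = lam ^+ 0 *: sbe 27.
Proof.
rewrite /sbe (cl_ext geS) /=; [|by qp|by []].
rewrite /peval /= -!/(W xS _).
have -> : W xS [:: s_alpha; s_xi] = S_param lam (Sbar s_alpha) *: W xS [:: s_rho; s_omega; s_nu] := stepF [:: ] [:: ] s_alpha.
by rewrite /= ?scalerA ?invr1 ?mul1r ?mulr1 ?expr0 ?expr1 ?scale1r.
Qed.

Lemma cl_7_nu : sbe 7 * xS s_nu = lam ^+ 0 *: sbe 14.
Proof.
rewrite /sbe (cl_ext geS) /=; [|by qp|by []].
rewrite /peval /= -!/(W xS _).
have -> : W xS [:: s_beta; s_nu] = S_param lam (Sbar s_beta) *: W xS [:: s_xi] := stepF [:: ] [:: ] s_beta.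
by rewrite /= ?scalerA ?invr1 ?mul1r ?mulr1 ?expr0 ?expr1 ?scale1r.
Qed.

Lemma cl_8_mu : sbe 8 * xS s_mu = lam ^+ 0 *: sbe 31.
Proof.
rewrite /sbe (cl_ext geS) /=; [|by qp|by []].
rewrite /peval /= -!/(W xS _).
have -> : W xS [:: s_gamma; s_mu] = S_param lam (Sbar s_gamma) *: W xS [:: s_nu; s_delta; s_rho] := stepF [:: ] [:: ] s_gamma.
by rewrite /= ?scalerA ?invr1 ?mul1r ?mulr1 ?expr0 ?expr1 ?scale1r.
Qed.

Lemma cl_9_rh : sbe 9 * xS s_rho = lam ^+ 0 *: sbe 16.
Proof.
rewrite /sbe (cl_ext geS) /=; [|by qp|by []].
rewrite /peval /= -!/(W xS _).
have -> : W xS [:: s_sigma; s_rho] = S_param lam (Sbar s_sigma) *: W xS [:: s_mu] := stepF [:: ] [:: ] s_sigma.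
by rewrite /= ?scalerA ?invr1 ?mul1r ?mulr1 ?expr0 ?expr1 ?scale1r.
Qed.

Lemma cl_10_ep : sbe 10 * xS s_eps = lam ^+ 1 *: sbe 19.
Proof.
rewrite /sbe (cl_ext geS) /=; [|by qp|by []].
rewrite /peval /= -!/(W xS _).
have -> : W xS [:: s_rho; s_eps] = S_param lam (Sbar s_rho) *: W xS [:: s_alpha; s_beta; s_gamma] := stepF [:: ] [:: ] s_rho.
by rewrite /= ?scalerA ?invr1 ?mul1r ?mulr1 ?expr0 ?expr1 ?scale1r.
Qed.

Lemma cl_11_ga : sbe 11 * xS s_gamma = lam ^+ 0 *: sbe 17.
Proof.
rewrite /sbe (cl_ext geS) /=; [|by qp|by []].
rewrite /peval /= -!/(W xS _).
have -> : W xS [:: s_omega; s_gamma] = S_param lam (Sbar s_omega) *: W xS [:: s_eps] := stepF [:: ] [:: ] s_omega.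
by rewrite /= ?scalerA ?invr1 ?mul1r ?mulr1 ?expr0 ?expr1 ?scale1r.
Qed.

Lemma cl_12_et : sbe 12 * xS s_eta = lam ^+ 1 *: sbe 23.
Proof.
rewrite /sbe (cl_ext geS) /=; [|by qp|by []].
rewrite /peval /= -!/(W xS _).
have -> : W xS [:: s_nu; s_eta] = S_param lam (Sbar s_nu) *: W xS [:: s_gamma; s_sigma; s_alpha] := stepF [:: ] [:: ] s_nu.
by rewrite /= ?scalerA ?invr1 ?mul1r ?mulr1 ?expr0 ?expr1 ?scale1r.
Qed.

Lemma cl_13_al : sbe 13 * xS s_alpha = lam ^+ 0 *: sbe 15.
Proof.
rewrite /sbe (cl_ext geS) /=; [|by qp|by []].
rewrite /peval /= -!/(W xS _).
have -> : W xS [:: s_delta; s_alpha] = S_param lam (Sbar s_delta) *: W xS [:: s_eta] := stepF [:: ] [:: ] s_delta.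
by rewrite /= ?scalerA ?invr1 ?mul1r ?mulr1 ?expr0 ?expr1 ?scale1r.
Qed.

Lemma cl_14_de : sbe 14 * xS s_delta = lam ^+ 1 *: sbe 21.
Proof.
rewrite /sbe (cl_ext geS) /=; [|by qp|by []].
rewrite /peval /= -!/(W xS _).
have -> : W xS [:: s_xi; s_delta] = S_param lam (Sbar s_xi) *: W xS [:: s_beta; s_gamma; s_sigma] := stepF [:: ] [:: ] s_xi.
by rewrite /= ?scalerA ?invr1 ?mul1r ?mulr1 ?expr0 ?expr1 ?scale1r.
Qed.

Lemma cl_14_et : sbe 14 * xS s_eta = lam ^+ 1 *: sbe 35.
Proof.
rewrite /sbe (cl_ext geS) /=; [|by qp|by []].
rewrite /peval /= -!/(W xS _).
have -> : W xS [:: s_xi; s_eta] = (S_param lam (Sbar s_beta))^-1 *: W xS [:: s_beta; s_nu; s_eta] := stepB [:: ] [:: s_eta] s_beta.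
have -> : W xS [:: s_beta; s_nu; s_eta] = S_param lam (Sbar s_nu) *: W xS [:: s_beta; s_gamma; s_sigma; s_alpha] := stepF [:: s_beta] [:: ] s_nu.
by rewrite /= ?scalerA ?invr1 ?mul1r ?mulr1 ?expr0 ?expr1 ?scale1r.
Qed.

Lemma cl_15_be : sbe 15 * xS s_beta = lam ^+ 0 *: sbe 33.
Proof.
rewrite /sbe (cl_ext geS) /=; [|by qp|by []].
rewrite /peval /= -!/(W xS _).
have -> : W xS [:: s_eta; s_beta] = S_param lam (Sbar s_eta) *: W xS [:: s_delta; s_rho; s_omega] := stepF [:: ] [:: ] s_eta.
by rewrite /= ?scalerA ?invr1 ?mul1r ?mulr1 ?expr0 ?expr1 ?scale1r.
Qed.

Lemma cl_15_xi : sbe 15 * xS s_xi = lam ^+ 0 *: sbe 38.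
Proof.
rewrite /sbe (cl_ext geS) /=; [|by qp|by []].
rewrite /peval /= -!/(W xS _).
have -> : W xS [:: s_eta; s_xi] = (S_param lam (Sbar s_beta))^-1 *: W xS [:: s_eta; s_beta; s_nu] := stepB [:: s_eta] [:: ] s_beta.
have -> : W xS [:: s_eta; s_beta; s_nu] = S_param lam (Sbar s_eta) *: W xS [:: s_delta; s_rho; s_omega; s_nu] := stepF [:: ] [:: s_nu] s_eta.
by rewrite /= ?scalerA ?invr1 ?mul1r ?mulr1 ?expr0 ?expr1 ?scale1r.
Qed.

Lemma cl_16_om : sbe 16 * xS s_omega = lam ^+ 1 *: sbe 25.
Proof.
rewrite /sbe (cl_ext geS) /=; [|by qp|by []].
rewrite /peval /= -!/(W xS _).
have -> : W xS [:: s_mu; s_omega] = S_param lam (Sbar s_mu) *: W xS [:: s_sigma; s_alpha; s_beta] := stepF [:: ] [:: ] s_mu.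
by rewrite /= ?scalerA ?invr1 ?mul1r ?mulr1 ?expr0 ?expr1 ?scale1r.
Qed.

Lemma cl_16_ep : sbe 16 * xS s_eps = lam ^+ 1 *: sbe 37.
Proof.
rewrite /sbe (cl_ext geS) /=; [|by qp|by []].
rewrite /peval /= -!/(W xS _).
have -> : W xS [:: s_mu; s_eps] = (S_param lam (Sbar s_sigma))^-1 *: W xS [:: s_sigma; s_rho; s_eps] := stepB [:: ] [:: s_eps] s_sigma.
have -> : W xS [:: s_sigma; s_rho; s_eps] = S_param lam (Sbar s_rho) *: W xS [:: s_sigma; s_alpha; s_beta; s_gamma] := stepF [:: s_sigma] [:: ] s_rho.
by rewrite /= ?scalerA ?invr1 ?mul1r ?mulr1 ?expr0 ?expr1 ?scale1r.
Qed.

Lemma cl_17_si : sbe 17 * xS s_sigma = lam ^+ 0 *: sbe 29.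
Proof.
rewrite /sbe (cl_ext geS) /=; [|by qp|by []].
rewrite /peval /= -!/(W xS _).
have -> : W xS [:: s_eps; s_sigma] = S_param lam (Sbar s_eps) *: W xS [:: s_omega; s_nu; s_delta] := stepF [:: ] [:: ] s_eps.
by rewrite /= ?scalerA ?invr1 ?mul1r ?mulr1 ?expr0 ?expr1 ?scale1r.
Qed.

Lemma cl_17_mu : sbe 17 * xS s_mu = lam ^+ 0 *: sbe 39.
Proof.
rewrite /sbe (cl_ext geS) /=; [|by qp|by []].
rewrite /peval /= -!/(W xS _).
have -> : W xS [:: s_eps; s_mu] = (S_param lam (Sbar s_sigma))^-1 *: W xS [:: s_eps; s_sigma; s_rho] := stepB [:: s_eps] [:: ] s_sigma.
have -> : W xS [:: s_eps; s_sigma; s_rho] = S_param lam (Sbar s_eps) *: W xS [:: s_omega; s_nu; s_delta; s_rho] := stepF [:: ] [:: s_rho] s_eps.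
by rewrite /= ?scalerA ?invr1 ?mul1r ?mulr1 ?expr0 ?expr1 ?scale1r.
Qed.

Lemma cl_18_nu : sbe 18 * xS s_nu = lam ^+ 0 *: sbe 27.
Proof.
rewrite /sbe (cl_ext geS) /=; [|by qp|by []].
rewrite /peval /= -!/(W xS _).
have -> : W xS [:: s_alpha; s_beta; s_nu] = S_param lam (Sbar s_beta) *: W xS [:: s_alpha; s_xi] := stepF [:: s_alpha] [:: ] s_beta.
have -> : W xS [:: s_alpha; s_xi] = S_param lam (Sbar s_alpha) *: W xS [:: s_rho; s_omega; s_nu] := stepF [:: ] [:: ] s_alpha.
by rewrite /= ?scalerA ?invr1 ?mul1r ?mulr1 ?expr0 ?expr1 ?scale1r.
Qed.

Lemma cl_19_mu : sbe 19 * xS s_mu = 0.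
Proof.
rewrite /sbe (cl_ext geS) /=; [|by qp|by []].
rewrite /peval /= -!/(W xS _).
have -> : W xS [:: s_alpha; s_beta; s_gamma; s_mu] = 0 := @stepZ2 [:: s_alpha] [:: ] s_beta isT.
by rewrite ?scaler0.
Qed.

Lemma cl_20_mu : sbe 20 * xS s_mu = 0.
Proof.
rewrite /sbe (cl_ext geS) /=; [|by qp|by []].
rewrite /peval /= -!/(W xS _).
have -> : W xS [:: s_beta; s_gamma; s_mu] = 0 := @stepZ2 [:: ] [:: ] s_beta isT.
by rewrite ?scaler0.
Qed.

Lemma cl_21_rh : sbe 21 * xS s_rho = 0.
Proof.
rewrite /sbe (cl_ext geS) /=; [|by qp|by []].
rewrite /peval /= -!/(W xS _).
have -> : W xS [:: s_beta; s_gamma; s_sigma; s_rho] = S_param lam (Sbar s_sigma) *: W xS [:: s_beta; s_gamma; s_mu] := stepF [:: s_beta; s_gamma] [:: ] s_sigma.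
have -> : W xS [:: s_beta; s_gamma; s_mu] = 0 := @stepZ2 [:: ] [:: ] s_beta isT.
by rewrite ?scaler0.
Qed.

Lemma cl_22_rh : sbe 22 * xS s_rho = lam ^+ 0 *: sbe 31.
Proof.
rewrite /sbe (cl_ext geS) /=; [|by qp|by []].
rewrite /peval /= -!/(W xS _).
have -> : W xS [:: s_gamma; s_sigma; s_rho] = S_param lam (Sbar s_sigma) *: W xS [:: s_gamma; s_mu] := stepF [:: s_gamma] [:: ] s_sigma.
have -> : W xS [:: s_gamma; s_mu] = S_param lam (Sbar s_gamma) *: W xS [:: s_nu; s_delta; s_rho] := stepF [:: ] [:: ] s_gamma.
by rewrite /= ?scalerA ?invr1 ?mul1r ?mulr1 ?expr0 ?expr1 ?scale1r.
Qed.

Lemma cl_23_xi : sbe 23 * xS s_xi = 0.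
Proof.
rewrite /sbe (cl_ext geS) /=; [|by qp|by []].
rewrite /peval /= -!/(W xS _).
have -> : W xS [:: s_gamma; s_sigma; s_alpha; s_xi] = 0 := @stepZ2 [:: s_gamma] [:: ] s_sigma isT.
by rewrite ?scaler0.
Qed.

Lemma cl_24_xi : sbe 24 * xS s_xi = 0.
Proof.
rewrite /sbe (cl_ext geS) /=; [|by qp|by []].
rewrite /peval /= -!/(W xS _).
have -> : W xS [:: s_sigma; s_alpha; s_xi] = 0 := @stepZ2 [:: ] [:: ] s_sigma isT.
by rewrite ?scaler0.
Qed.

Lemma cl_25_nu : sbe 25 * xS s_nu = 0.
Proof.
rewrite /sbe (cl_ext geS) /=; [|by qp|by []].
rewrite /peval /= -!/(W xS _).
have -> : W xS [:: s_sigma; s_alpha; s_beta; s_nu] = S_param lam (Sbar s_beta) *: W xS [:: s_sigma; s_alpha; s_xi] := stepF [:: s_sigma; s_alpha] [:: ] s_beta.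
have -> : W xS [:: s_sigma; s_alpha; s_xi] = 0 := @stepZ2 [:: ] [:: ] s_sigma isT.
by rewrite ?scaler0.
Qed.

Lemma cl_26_ga : sbe 26 * xS s_gamma = lam ^+ 1 *: sbe 19.
Proof.
rewrite /sbe (cl_ext geS) /=; [|by qp|by []].
rewrite /peval /= -!/(W xS _).
have -> : W xS [:: s_rho; s_omega; s_gamma] = S_param lam (Sbar s_omega) *: W xS [:: s_rho; s_eps] := stepF [:: s_rho] [:: ] s_omega.
have -> : W xS [:: s_rho; s_eps] = S_param lam (Sbar s_rho) *: W xS [:: s_alpha; s_beta; s_gamma] := stepF [:: ] [:: ] s_rho.
by rewrite /= ?scalerA ?invr1 ?mul1r ?mulr1 ?expr0 ?expr1 ?scale1r.
Qed.

Lemma cl_27_de : sbe 27 * xS s_delta = lam ^+ 1 *: sbe 34.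
Proof.
rewrite /sbe (cl_ext geS) /=; [|by qp|by []].
rewrite /peval /= -!/(W xS _).
have -> : W xS [:: s_rho; s_omega; s_nu; s_delta] = (S_param lam (Sbar s_alpha))^-1 *: W xS [:: s_alpha; s_xi; s_delta] := stepB [:: ] [:: s_delta] s_alpha.
have -> : W xS [:: s_alpha; s_xi; s_delta] = S_param lam (Sbar s_xi) *: W xS [:: s_alpha; s_beta; s_gamma; s_sigma] := stepF [:: s_alpha] [:: ] s_xi.
by rewrite /= ?scalerA ?invr1 ?mul1r ?mulr1 ?expr0 ?expr1 ?scale1r.
Qed.

Lemma cl_27_et : sbe 27 * xS s_eta = 0.
Proof.
rewrite /sbe (cl_ext geS) /=; [|by qp|by []].
rewrite /peval /= -!/(W xS _).
have -> : W xS [:: s_rho; s_omega; s_nu; s_eta] = 0 := @stepZ2 [:: s_rho] [:: ] s_omega isT.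
by rewrite ?scaler0.
Qed.

Lemma cl_28_et : sbe 28 * xS s_eta = 0.
Proof.
rewrite /sbe (cl_ext geS) /=; [|by qp|by []].
rewrite /peval /= -!/(W xS _).
have -> : W xS [:: s_omega; s_nu; s_eta] = 0 := @stepZ2 [:: ] [:: ] s_omega isT.
by rewrite ?scaler0.
Qed.

Lemma cl_29_al : sbe 29 * xS s_alpha = 0.
Proof.
rewrite /sbe (cl_ext geS) /=; [|by qp|by []].
rewrite /peval /= -!/(W xS _).
have -> : W xS [:: s_omega; s_nu; s_delta; s_alpha] = S_param lam (Sbar s_delta) *: W xS [:: s_omega; s_nu; s_eta] := stepF [:: s_omega; s_nu] [:: ] s_delta.
have -> : W xS [:: s_omega; s_nu; s_eta] = 0 := @stepZ2 [:: ] [:: ] s_omega isT.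
by rewrite ?scaler0.
Qed.

Lemma cl_30_al : sbe 30 * xS s_alpha = lam ^+ 1 *: sbe 23.
Proof.
rewrite /sbe (cl_ext geS) /=; [|by qp|by []].
rewrite /peval /= -!/(W xS _).
have -> : W xS [:: s_nu; s_delta; s_alpha] = S_param lam (Sbar s_delta) *: W xS [:: s_nu; s_eta] := stepF [:: s_nu] [:: ] s_delta.
have -> : W xS [:: s_nu; s_eta] = S_param lam (Sbar s_nu) *: W xS [:: s_gamma; s_sigma; s_alpha] := stepF [:: ] [:: ] s_nu.
by rewrite /= ?scalerA ?invr1 ?mul1r ?mulr1 ?expr0 ?expr1 ?scale1r.
Qed.

Lemma cl_31_om : sbe 31 * xS s_omega = lam ^+ 1 *: sbe 36.
Proof.
rewrite /sbe (cl_ext geS) /=; [|by qp|by []].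
rewrite /peval /= -!/(W xS _).
have -> : W xS [:: s_nu; s_delta; s_rho; s_omega] = (S_param lam (Sbar s_gamma))^-1 *: W xS [:: s_gamma; s_mu; s_omega] := stepB [:: ] [:: s_omega] s_gamma.
have -> : W xS [:: s_gamma; s_mu; s_omega] = S_param lam (Sbar s_mu) *: W xS [:: s_gamma; s_sigma; s_alpha; s_beta] := stepF [:: s_gamma] [:: ] s_mu.
by rewrite /= ?scalerA ?invr1 ?mul1r ?mulr1 ?expr0 ?expr1 ?scale1r.
Qed.

Lemma cl_31_ep : sbe 31 * xS s_eps = 0.
Proof.
rewrite /sbe (cl_ext geS) /=; [|by qp|by []].
rewrite /peval /= -!/(W xS _).
have -> : W xS [:: s_nu; s_delta; s_rho; s_eps] = 0 := @stepZ2 [:: s_nu] [:: ] s_delta isT.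
by rewrite ?scaler0.
Qed.

Lemma cl_32_ep : sbe 32 * xS s_eps = 0.
Proof.
rewrite /sbe (cl_ext geS) /=; [|by qp|by []].
rewrite /peval /= -!/(W xS _).
have -> : W xS [:: s_delta; s_rho; s_eps] = 0 := @stepZ2 [:: ] [:: ] s_delta isT.
by rewrite ?scaler0.
Qed.

Lemma cl_33_ga : sbe 33 * xS s_gamma = 0.
Proof.
rewrite /sbe (cl_ext geS) /=; [|by qp|by []].
rewrite /peval /= -!/(W xS _).
have -> : W xS [:: s_delta; s_rho; s_omega; s_gamma] = S_param lam (Sbar s_omega) *: W xS [:: s_delta; s_rho; s_eps] := stepF [:: s_delta; s_rho] [:: ] s_omega.
have -> : W xS [:: s_delta; s_rho; s_eps] = 0 := @stepZ2 [:: ] [:: ] s_delta isT.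
by rewrite ?scaler0.
Qed.

Lemma cl_34_al : sbe 34 * xS s_alpha = 0.
Proof.
rewrite /sbe (cl_ext geS) /=; [|by qp|by []].
rewrite /peval /= -!/(W xS _).
have -> : W xS [:: s_alpha; s_beta; s_gamma; s_sigma; s_alpha] = (S_param lam (Sbar s_rho))^-1 *: W xS [:: s_rho; s_eps; s_sigma; s_alpha] := stepB [:: ] [:: s_sigma; s_alpha] s_rho.
have -> : W xS [:: s_rho; s_eps; s_sigma; s_alpha] = 0 := @stepZ1 [:: s_rho] [:: ] s_eps isT.
by rewrite ?scaler0.
Qed.

Lemma cl_34_rh : sbe 34 * xS s_rho = 0.
Proof.
rewrite /sbe (cl_ext geS) /=; [|by qp|by []].
rewrite /peval /= -!/(W xS _).
have -> : W xS [:: s_alpha; s_beta; s_gamma; s_sigma; s_rho] = S_param lam (Sbar s_sigma) *: W xS [:: s_alpha; s_beta; s_gamma; s_mu] := stepF [:: s_alpha; s_beta; s_gamma] [:: ] s_sigma.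
have -> : W xS [:: s_alpha; s_beta; s_gamma; s_mu] = 0 := @stepZ2 [:: s_alpha] [:: ] s_beta isT.
by rewrite ?scaler0.
Qed.

Lemma cl_35_be : sbe 35 * xS s_beta = 0.
Proof.
rewrite /sbe (cl_ext geS) /=; [|by qp|by []].
rewrite /peval /= -!/(W xS _).
have -> : W xS [:: s_beta; s_gamma; s_sigma; s_alpha; s_beta] = (S_param lam (Sbar s_mu))^-1 *: W xS [:: s_beta; s_gamma; s_mu; s_omega] := stepB [:: s_beta; s_gamma] [:: ] s_mu.
have -> : W xS [:: s_beta; s_gamma; s_mu; s_omega] = 0 := @stepZ2 [:: ] [:: s_omega] s_beta isT.
by rewrite ?scaler0.
Qed.

Lemma cl_35_xi : sbe 35 * xS s_xi = 0.
Proof.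
rewrite /sbe (cl_ext geS) /=; [|by qp|by []].
rewrite /peval /= -!/(W xS _).
have -> : W xS [:: s_beta; s_gamma; s_sigma; s_alpha; s_xi] = 0 := @stepZ2 [:: s_beta; s_gamma] [:: ] s_sigma isT.
by rewrite ?scaler0.
Qed.

Lemma cl_36_ga : sbe 36 * xS s_gamma = 0.
Proof.
rewrite /sbe (cl_ext geS) /=; [|by qp|by []].
rewrite /peval /= -!/(W xS _).
have -> : W xS [:: s_gamma; s_sigma; s_alpha; s_beta; s_gamma] = (S_param lam (Sbar s_nu))^-1 *: W xS [:: s_nu; s_eta; s_beta; s_gamma] := stepB [:: ] [:: s_beta; s_gamma] s_nu.
have -> : W xS [:: s_nu; s_eta; s_beta; s_gamma] = 0 := @stepZ1 [:: s_nu] [:: ] s_eta isT.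
by rewrite ?scaler0.
Qed.

Lemma cl_36_nu : sbe 36 * xS s_nu = 0.
Proof.
rewrite /sbe (cl_ext geS) /=; [|by qp|by []].
rewrite /peval /= -!/(W xS _).
have -> : W xS [:: s_gamma; s_sigma; s_alpha; s_beta; s_nu] = S_param lam (Sbar s_beta) *: W xS [:: s_gamma; s_sigma; s_alpha; s_xi] := stepF [:: s_gamma; s_sigma; s_alpha] [:: ] s_beta.
have -> : W xS [:: s_gamma; s_sigma; s_alpha; s_xi] = 0 := @stepZ2 [:: s_gamma] [:: ] s_sigma isT.
by rewrite ?scaler0.
Qed.

Lemma cl_37_si : sbe 37 * xS s_sigma = 0.
Proof.
rewrite /sbe (cl_ext geS) /=; [|by qp|by []].
rewrite /peval /= -!/(W xS _).
have -> : W xS [:: s_sigma; s_alpha; s_beta; s_gamma; s_sigma] = (S_param lam (Sbar s_xi))^-1 *: W xS [:: s_sigma; s_alpha; s_xi; s_delta] := stepB [:: s_sigma; s_alpha] [:: ] s_xi.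
have -> : W xS [:: s_sigma; s_alpha; s_xi; s_delta] = 0 := @stepZ2 [:: ] [:: s_delta] s_sigma isT.
by rewrite ?scaler0.
Qed.

Lemma cl_37_mu : sbe 37 * xS s_mu = 0.
Proof.
rewrite /sbe (cl_ext geS) /=; [|by qp|by []].
rewrite /peval /= -!/(W xS _).
have -> : W xS [:: s_sigma; s_alpha; s_beta; s_gamma; s_mu] = 0 := @stepZ2 [:: s_sigma; s_alpha] [:: ] s_beta isT.
by rewrite ?scaler0.
Qed.

Lemma cl_38_de : sbe 38 * xS s_delta = 0.
Proof.
rewrite /sbe (cl_ext geS) /=; [|by qp|by []].
rewrite /peval /= -!/(W xS _).
have -> : W xS [:: s_delta; s_rho; s_omega; s_nu; s_delta] = (S_param lam (Sbar s_eps))^-1 *: W xS [:: s_delta; s_rho; s_eps; s_sigma] := stepB [:: s_delta; s_rho] [:: ] s_eps.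
have -> : W xS [:: s_delta; s_rho; s_eps; s_sigma] = 0 := @stepZ2 [:: ] [:: s_sigma] s_delta isT.
by rewrite ?scaler0.
Qed.

Lemma cl_38_et : sbe 38 * xS s_eta = 0.
Proof.
rewrite /sbe (cl_ext geS) /=; [|by qp|by []].
rewrite /peval /= -!/(W xS _).
have -> : W xS [:: s_delta; s_rho; s_omega; s_nu; s_eta] = 0 := @stepZ2 [:: s_delta; s_rho] [:: ] s_omega isT.
by rewrite ?scaler0.
Qed.

Lemma cl_39_om : sbe 39 * xS s_omega = 0.
Proof.
rewrite /sbe (cl_ext geS) /=; [|by qp|by []].
rewrite /peval /= -!/(W xS _).
have -> : W xS [:: s_omega; s_nu; s_delta; s_rho; s_omega] = (S_param lam (Sbar s_eta))^-1 *: W xS [:: s_omega; s_nu; s_eta; s_beta] := stepB [:: s_omega; s_nu] [:: ] s_eta.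
have -> : W xS [:: s_omega; s_nu; s_eta; s_beta] = 0 := @stepZ2 [:: ] [:: s_beta] s_omega isT.
by rewrite ?scaler0.
Qed.

Lemma cl_39_ep : sbe 39 * xS s_eps = 0.
Proof.
rewrite /sbe (cl_ext geS) /=; [|by qp|by []].
rewrite /peval /= -!/(W xS _).
have -> : W xS [:: s_omega; s_nu; s_delta; s_rho; s_eps] = 0 := @stepZ2 [:: s_omega; s_nu] [:: ] s_delta isT.
by rewrite ?scaler0.
Qed.

Ltac man_tac := first [ exact: cl_6_xi | exact: cl_7_nu | exact: cl_8_mu | exact: cl_9_rh | exact: cl_10_ep | exact: cl_11_ga | exact: cl_12_et | exact: cl_13_al | exact: cl_14_de | exact: cl_14_et | exact: cl_15_be | exact: cl_15_xi | exact: cl_16_om | exact: cl_16_ep | exact: cl_17_si | exact: cl_17_mu | exact: cl_18_nu | exact: cl_19_mu | exact: cl_20_mu | exact: cl_21_rh | exact: cl_22_rh | exact: cl_23_xi | exact: cl_24_xi | exact: cl_25_nu | exact: cl_26_ga | exact: cl_27_de | exact: cl_27_et | exact: cl_28_et | exact: cl_29_al | exact: cl_30_al | exact: cl_31_om | exact: cl_31_ep | exact: cl_32_ep | exact: cl_33_ga | exact: cl_34_al | exact: cl_34_rh | exact: cl_35_be | exact: cl_35_xi | exact: cl_36_ga | exact: cl_36_nu | exact: cl_37_si | exact: cl_37_mu | exact: cl_38_de | exact: cl_38_et | exact: cl_39_om | exact: cl_39_ep ].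


Ltac clos_tac := rewrite /sbe /=; first
  [ rewrite (cl_mism geS); [by [] | by rewrite /ptgt /= vtx_eqE]
  | rewrite (cl_ext geS); [by rewrite expr0 scale1r | by qp | by [] ] ].

Lemma closS i a : (i < 40)%N -> sbe i * xS a = tvS (stab i a).
Proof.
case: a; do 40 (try (case: i => [|i])); move=> // _; rewrite /tvS /=; try clos_tac.
all: man_tac.
Qed.

Lemma stab_bnd i a : (i < 40)%N -> if stab i a is Some (j, _) then (j < 40)%N else true.
Proof. by case: a; do 40 (try (case: i => [|i])). Qed.

Lemma spanS (u : S) : exists c : nat -> K, u = \sum_(i < 40) c i *: sbe i.
Proof.
apply: (present_span (iv := vtx_num) geS surjS) => //.
- by case.
- by case.
move=> i a Hi; rewrite closS //; have := stab_bnd a Hi.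
case: (stab i a) => [[j k] /= Hj|_]; first by exists j, (lam ^+ k).
by exists 0%N, 0; rewrite scale0r.
Qed.

End SMain.



Section CMain.
Variables (K : fieldType) (lam : K) (C : algType K) (eC : vtx -> C) (xC : carr -> C).
Hypothesis geC : good C_src C_tgt eC xC.
Hypothesis surjC : forall b, exists f, kq_valid C_src C_tgt f /\ keval eC xC f = b.
Hypothesis kerC : forall f, kq_valid C_src C_tgt f ->
  (keval eC xC f = 0 <-> in_ideal C_src C_tgt (C_rels lam) f).
Variable psiC : C -> 'M[K]_20.
Hypothesis psiC_lin : forall k u v, psiC (k *: u + v) = k *: psiC u + psiC v.
Hypothesis psiC_mul : forall u v, psiC (u * v) = psiC u * psiC v.
Hypothesis psiC_1 : psiC 1 = 1.
Hypothesis psiC_key : forall f, kq_valid C_src C_tgt f ->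
  psiC (keval eC xC f) = keval (eM lam) (xM lam) f.

Lemma psiC_e v : psiC (eC v) = eM lam v.
Proof.
have := psiC_key (f := kpath K (v, [::])); rewrite !keval_kpath //.
by apply; rewrite /kq_valid /= /is_qpath.
Qed.
Lemma psiC_x a : psiC (xC a) = xM lam a.
Proof.
have := psiC_key (f := kpath K (C_src a, [:: a])); rewrite !keval_kpath //.
by rewrite /peval /= !big_seq1; apply; rewrite /kq_valid /= /is_qpath /= eqxx.
Qed.

Lemma relC (r : kq K vtx carr) v u : r \in C_rels lam ->
  kq_valid C_src C_tgt r ->
  (forall z, z \in r -> psrc z.2 = v /\ ptgt C_tgt z.2 = u) ->
  keval eC xC r = 0.
Proof. by move=> Hr Vr Hz; apply/(kerC Vr)/rel_in_ideal; eauto. Qed.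

Lemma relC1 : W xC [:: c_delta; c_alpha; c_beta] = W xC [:: c_delta; c_rho; c_omega].
Proof.
have H : keval eC xC [:: (1, (v5, [:: c_delta; c_alpha; c_beta])); (-1, (v5, [:: c_delta; c_rho; c_omega]))] = 0.
  apply: (@relC _ v5 v3).
- by rewrite /C_rels inE eqxx.
- by rewrite /kq_valid /= /is_qpath /= ?eqxx.
- by move=> z; rewrite !inE => /orP[] /eqP ->.
by move: H => /rel_eq2 => /(_ isT isT); rewrite opprK scale1r.
Qed.

Lemma relC2 : W xC [:: c_sigma; c_rho; c_omega] = lam *: W xC [:: c_sigma; c_alpha; c_beta].
Proof.
have H : keval eC xC [:: (1, (v4, [:: c_sigma; c_rho; c_omega])); (- lam, (v4, [:: c_sigma; c_alpha; c_beta]))] = 0.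
  apply: (@relC _ v4 v3).
- by rewrite /C_rels !inE eqxx orbT.
- by rewrite /kq_valid /= /is_qpath /= ?eqxx.
- by move=> z; rewrite !inE => /orP[] /eqP ->.
by move: H => /rel_eq2 => /(_ isT isT); rewrite opprK.
Qed.

Definition cbe (i : nat) : C := peval eC xC (cb i).
Definition tvC (o : option (nat * nat)) : C := if o is Some (j, k) then lam ^+ k *: cbe j else 0.

Ltac clos_tac := rewrite /cbe /=; first
  [ rewrite (cl_mism geC); [by [] | by rewrite /ptgt /= vtx_eqE]
  | rewrite (cl_ext geC); [by rewrite expr0 scale1r | by qp | by [] ] ].

Lemma closC i a : (i < 20)%N -> cbe i * xC a = tvC (ctab i a).
Proof.
case: a; do 20 (try (case: i => [|i])); move=> // _; rewrite /tvC /=; try clos_tac.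
- rewrite /cbe /= (cl_ext geC) ?expr0 ?scale1r //=; last by qp.
  by rewrite /peval /= -!/(W xC _) relC1.
- rewrite /cbe /= (cl_ext geC) ?expr1 //=; last by qp.
  by rewrite /peval /= -!/(W xC _) relC2.
Qed.

Definition cgen (g : cg) : C := match g with CV v => eC v | CA a => xC a end.
Definition cw (w : seq cg) : C := \prod_(g <- w) cgen g.

Lemma cw_cat w1 w2 : cw (w1 ++ w2) = cw w1 * cw w2.
Proof. by rewrite /cw big_cat. Qed.

Lemma peval_cw (p : qpath vtx carr) :
  peval eC xC p = cw (if p.2 is [::] then [:: CV p.1] else map CA p.2).
Proof.
case: p => v [|a w]; first by rewrite /peval /cw /= big_seq1.
by rewrite /peval /cw [in RHS]big_map.
Qed.

Lemma cbe_cw i : cbe i = cw (cbw i).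
Proof. by rewrite /cbe peval_cw. Qed.

Lemma psiC_0 : psiC 0 = 0.
Proof.
have H := psiC_lin 1 0 0; rewrite !scale1r addr0 in H.
by apply: (addrI (psiC 0)); rewrite addr0 -H.
Qed.
Lemma psiC_add u v : psiC (u + v) = psiC u + psiC v.
Proof. by have := psiC_lin 1 u v; rewrite !scale1r. Qed.
Lemma psiC_scale k u : psiC (k *: u) = k *: psiC u.
Proof. by have := psiC_lin k u 0; rewrite !addr0 psiC_0 addr0. Qed.

Lemma psiC_cw w : psiC (cw w) = mxw lam w.
Proof.
elim: w => [|g w IH]; first by rewrite /cw mxwE !big_nil psiC_1.
rewrite /cw mxwE !big_cons psiC_mul -/(cw w) IH mxwE; congr (_ * _).
by case: g => [v|a] /=; rewrite ?psiC_e ?psiC_x.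
Qed.

Definition rone : 'rV[K]_20 := \sum_(i < 6) rowst lam (Some (nat_of_ord i, 0%N)).
Definition dC (j : nat) (u : C) : K := (rone *m psiC u) 0 (inord j).

Lemma dC_lin j k u v : dC j (k *: u + v) = k * dC j u + dC j v.
Proof. by rewrite /dC psiC_lin mulmxDr -scalemxAr !mxE. Qed.
Lemma dC_add j u v : dC j (u + v) = dC j u + dC j v.
Proof. by have := dC_lin j 1 u v; rewrite scale1r mul1r. Qed.
Lemma dC_0 j : dC j 0 = 0.
Proof. by rewrite /dC psiC_0 mulmx0 mxE. Qed.
Lemma dC_scale j k u : dC j (k *: u) = k * dC j u.
Proof. by have := dC_lin j k u 0; rewrite !addr0 dC_0 addr0. Qed.
Lemma dC_sum j (I : Type) (r : seq I) (P : pred I) (F : I -> C) :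
  dC j (\sum_(i <- r | P i) F i) = \sum_(i <- r | P i) dC j (F i).
Proof. exact: (big_morph (dC j) (dC_add j) (dC_0 j)). Qed.

Lemma dC_cw j w : (j < 20)%N -> dC j (cw w) = \sum_(k <- dlist j w) lam ^+ k.
Proof.
move=> Hj; rewrite /dC psiC_cw /rone mulmx_suml summxE.
rewrite /dlist big_flatten big_map.
have -> : iota 0 6 = index_iota 0 6 by [].
rewrite big_mkord.
apply: eq_bigr => i _; rewrite rowst_run; last by rewrite /= (ltn_trans (ltn_ord i)).
have : bnd (run w (Some (nat_of_ord i, 0%N))) by apply: run_bnd; rewrite /= (ltn_trans (ltn_ord i)).
case: (run w _) => [[j' k]|] /= Hb; last by rewrite mxE big_nil.
rewrite !mxE /=.
have -> : (inord j == inord j' :> 'I_20) = (j' == j).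
  apply/eqP/eqP => [/(congr1 val)|->] //; by rewrite /= !inordK.
by case: eqP => _; rewrite ?big_seq1 ?big_nil ?mulr1 ?mulr0.
Qed.

Lemma dlist_cb : all (fun j => all (fun k => dlist j (cbw k) == if j == k then [:: 0%N] else [::])
   (iota 0 20)) (iota 0 20).
Proof. by vm_compute. Qed.

Lemma dC_cbe j k : (j < 20)%N -> (k < 20)%N -> dC j (cbe k) = (j == k)%:R.
Proof.
move=> Hj Hk; rewrite cbe_cw dC_cw //.
have := all_iota_lt (all_iota_lt dlist_cb Hj) Hk; rewrite /= => /eqP ->.
by case: (j == k); rewrite ?big_seq1 ?big_nil.
Qed.

Lemma spanC (u : C) : exists c : nat -> K, u = \sum_(i < 20) c i *: cbe i.
Proof.
apply: (present_span (iv := vtx_num) geC surjC) => //.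
- by case.
- by case.
move=> i a Hi; rewrite closC //; have := gd_bnd (CA a) i; rewrite /=.
case: (ctab i a) => [[j k] /= Hj|_]; first by exists j, (lam ^+ k).
by exists 0%N, 0; rewrite scale0r.
Qed.

Lemma decC (u : C) : u = \sum_(k < 20) dC k u *: cbe k.
Proof.
have [c Hc] := spanC u; rewrite {1}Hc; apply: eq_bigr => k _; congr (_ *: _).
rewrite Hc dC_sum (bigD1 k) //= big1 ?addr0.
  by rewrite dC_scale dC_cbe // eqxx mulr1.
by move=> i /eqP Hik; rewrite dC_scale dC_cbe // (_ : (k == i :> nat) = false) ?mulr0 //;
   apply/eqP => E; apply: Hik; apply: val_inj.
Qed.

Local Notation TCC := (TC C).

Definition tcC (c : C) : TCC := @MkTC _ _ (c, fun _ => 0) (lin0 C).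
Definition fD (j : nat) (w1 w2 : seq cg) : C -> K := fun u => dC j (cw w2 * u * cw w1).
Lemma fD_lin j w1 w2 : lfb (fD j w1 w2).
Proof.
apply/lfbP => k u v; rewrite /fD mulrDr mulrDl -scalerAr -scalerAl.
by rewrite dC_lin.
Qed.
Definition tD j w1 w2 : TCC := @MkTC _ _ (0, fD j w1 w2) (fD_lin j w1 w2).

Lemma fD0 j w1 w2 : fD j w1 w2 0 = 0.
Proof. by rewrite /fD mulr0 mul0r dC_0. Qed.

Inductive tlet := TCl of cg | TDl of nat & nat.
Definition tl_val (x : tlet) : TCC :=
  match x with TCl g => tcC (cgen g) | TDl j k => lam ^+ k *: tD j [::] [::] end.
Definition tw (l : seq tlet) : TCC := \prod_(x <- l) tl_val x.

Inductive tform := FC of seq cg | FD of nat & nat & seq cg & seq cg | F0.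
Fixpoint tnorm (l : seq tlet) : tform :=
  match l with
  | [::] => FC [::]
  | TCl g :: l' => match tnorm l' with
                   | FC w => FC (g :: w)
                   | FD j k w1 w2 => FD j k (g :: w1) w2
                   | F0 => F0 end
  | TDl j k :: l' => match tnorm l' with
                   | FC w => FD j k [::] w
                   | _ => F0 end
  end.
Definition interp (f : tform) : TCC :=
  match f with FC w => tcC (cw w) | FD j k w1 w2 => lam ^+ k *: tD j w1 w2 | F0 => 0 end.

Lemma tcC_mul a b : tcC a * tcC b = tcC (a * b).
Proof. by apply: tc_eq => [|u] //=; rewrite addr0. Qed.
Lemma tcC_add a b : tcC a + tcC b = tcC (a + b).
Proof. by apply: tc_eq => [|u] //=; rewrite addr0. Qed.
Lemma tcC_0 : tcC 0 = 0.
Proof. by apply: tc_eq. Qed.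
Lemma tcC_1 : tcC 1 = 1.
Proof. by apply: tc_eq. Qed.
Lemma tcCD g k j w1 w2 : tcC (cgen g) * (lam ^+ k *: tD j w1 w2) = lam ^+ k *: tD j (g :: w1) w2.
Proof.
apply: tc_eq => [|u] /=; first by rewrite !scaler0 mulr0.
by rewrite addr0 /fD /cw big_cons !mulrA.
Qed.
Lemma tDC j k w : (lam ^+ k *: tD j [::] [::]) * tcC (cw w) = lam ^+ k *: tD j [::] w.
Proof.
apply: tc_eq => [|u] /=; first by rewrite scaler0 mul0r.
by rewrite add0r /fD /cw !big_nil mul1r !mulr1.
Qed.
Lemma tDD j k j' k' w1 w2 : (lam ^+ k *: tD j [::] [::]) * (lam ^+ k' *: tD j' w1 w2) = 0.
Proof.
apply: tc_eq => [|u] /=; first by rewrite scaler0 mul0r.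
by rewrite !scaler0 mulr0 mul0r !fD0 !mulr0 addr0.
Qed.

Lemma tw_cat l1 l2 : tw (l1 ++ l2) = tw l1 * tw l2.
Proof. by rewrite /tw big_cat. Qed.

Lemma tw_norm l : tw l = interp (tnorm l).
Proof.
elim: l => [|x l IH]; first by rewrite /tw big_nil /= /cw big_nil tcC_1.
rewrite /tw big_cons -/(tw l) IH.
case: x => [g|j k] /=.
  case: (tnorm l) => [w|j k w1 w2|] /=; last by rewrite mulr0.
    by rewrite tcC_mul /cw big_cons.
  by rewrite tcCD.
case: (tnorm l) => [w|j' k' w1 w2|] /=; last by rewrite mulr0.
  by rewrite tDC.
by rewrite tDD.
Qed.

Definition th (m : nat) (t : TCC) : K :=
  if (m < 20)%N then dC m (tcv t).1 else (tcv t).2 (cbe (m - 20)).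

Lemma th_lin m k t t' : th m (k *: t + t') = k * th m t + th m t'.
Proof. by rewrite /th; case: ifP => _ //=; rewrite dC_lin. Qed.
Lemma th_add m t t' : th m (t + t') = th m t + th m t'.
Proof. by have := th_lin m 1 t t'; rewrite scale1r mul1r. Qed.
Lemma th_0 m : th m 0 = 0.
Proof. by rewrite /th; case: ifP => _ //=; rewrite dC_0. Qed.
Lemma th_scale m k t : th m (k *: t) = k * th m t.
Proof. by have := th_lin m k t 0; rewrite !addr0 th_0 addr0. Qed.
Lemma th_sum m (I : Type) (r : seq I) (P : pred I) (F : I -> TCC) :
  th m (\sum_(i <- r | P i) F i) = \sum_(i <- r | P i) th m (F i).
Proof. exact: (big_morph (th m) (th_add m) (th_0 m)). Qed.

Lemma lf_sum (h : C -> K) (hl : lin_functional h) (I : Type) (r : seq I) (P : pred I) (F : I -> C) :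
  h (\sum_(i <- r | P i) F i) = \sum_(i <- r | P i) h (F i).
Proof. exact: (big_morph h (lf_add hl) (lf_0 hl)). Qed.

Lemma TC_ext (t t' : TCC) : (forall m, (m < 40)%N -> th m t = th m t') -> t = t'.
Proof.
move=> H; apply: tc_eq => [|u].
  rewrite (decC (tcv t).1) (decC (tcv t').1); apply: eq_bigr => k _.
  by have := H k (@ltn_trans 20 k 40 (ltn_ord k) isT); rewrite /th ltn_ord => ->.
rewrite (decC u) (lf_sum (tl t)) (lf_sum (tl t')); apply: eq_bigr => k _.
rewrite (lf_scale (tl t)) (lf_scale (tl t')); congr (_ * _).
have := H (k + 20)%N; rewrite /th (_ : (k + 20 < 20)%N = false); last by rewrite ltnNge leq_addl.
rewrite addnK => -> //.
by rewrite -[40%N]/(20 + 20)%N ltn_add2r ltn_ord.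
Qed.

Definition wf (f : tform) : bool := if f is FD j _ _ _ then (j < 20)%N else true.

Definition tcoord (f : tform) (m : nat) : seq nat :=
  match f with
  | FC w => if (m < 20)%N then dlist m w else [::]
  | FD j k w1 w2 => if (m < 20)%N then [::] else map (addn k) (dlist j (w2 ++ cbw (m - 20) ++ w1))
  | F0 => [::]
  end.

Lemma th_interp f m : wf f -> th m (interp f) = \sum_(e <- tcoord f m) lam ^+ e.
Proof.
case: f => [w|j k w1 w2|] /= Hw; rewrite /th.
- by case: ifP => Hm /=; rewrite ?dC_cw ?big_nil.
- case: ifP => Hm /=; first by rewrite scaler0 dC_0 big_nil.
  rewrite /fD cbe_cw -!cw_cat catA dC_cw // big_map mulr_sumr.
  by apply: eq_bigr => e _; rewrite exprD.
- by rewrite /= dC_0; case: ifP => _; rewrite big_nil.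
Qed.

Definition tchkF (f1 f2 : tform) (k : nat) : bool :=
  wf f1 && wf f2 &&
  all (fun m => perm_eq (tcoord f1 m) (map (addn k) (tcoord f2 m))) (iota 0 40).

Lemma tchkFP f1 f2 k : tchkF f1 f2 k -> interp f1 = lam ^+ k *: interp f2.
Proof.
case/andP => /andP[w1 w2] H; apply: TC_ext => m Hm.
rewrite th_scale !th_interp // (perm_big _ (all_iota_lt H Hm)) big_map mulr_sumr.
by apply: eq_bigr => e _; rewrite exprD.
Qed.

Definition tchk0 (f : tform) : bool := wf f && all (fun m => tcoord f m == [::]) (iota 0 40).
Lemma tchk0P f : tchk0 f -> interp f = 0.
Proof.
case/andP => w H; apply: TC_ext => m Hm.
by rewrite th_0 th_interp // (eqP (all_iota_lt H Hm)) big_nil.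
Qed.

Definition tchk2 (f f1 f2 : tform) (k1 k2 : nat) : bool :=
  [&& wf f, wf f1, wf f2 &
  all (fun m => perm_eq (tcoord f m) (map (addn k1) (tcoord f1 m) ++ map (addn k2) (tcoord f2 m))) (iota 0 40)].
Lemma tchk2P f f1 f2 k1 k2 : tchk2 f f1 f2 k1 k2 ->
  interp f = lam ^+ k1 *: interp f1 + lam ^+ k2 *: interp f2.
Proof.
case/and4P => w w1 w2 H; apply: TC_ext => m Hm.
rewrite th_add !th_scale !th_interp // (perm_big _ (all_iota_lt H Hm)) big_cat !big_map.
by rewrite !mulr_sumr; congr (_ + _); apply: eq_bigr => e _; rewrite exprD.
Qed.

Lemma tchkP l1 l2 k : tchkF (tnorm l1) (tnorm l2) k -> tw l1 = lam ^+ k *: tw l2.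
Proof. by rewrite !tw_norm; apply: tchkFP. Qed.
Lemma tchkP0 l : tchk0 (tnorm l) -> tw l = 0.
Proof. by rewrite tw_norm; apply: tchk0P. Qed.

Lemma tchkP1 l1 l2 : tchkF (tnorm l1) (tnorm l2) 0 -> tw l1 = tw l2.
Proof. by move/tchkP ->; rewrite expr0 scale1r. Qed.

Definition lettS (a : sarr) : seq tlet :=
  match a with
  | s_alpha => [:: TCl (CA c_alpha)] | s_beta => [:: TCl (CA c_beta)]
  | s_rho => [:: TCl (CA c_rho)] | s_omega => [:: TCl (CA c_omega)]
  | s_delta => [:: TCl (CA c_delta)] | s_sigma => [:: TCl (CA c_sigma)]
  | s_gamma => [:: TDl 19 0] | s_nu => [:: TDl 18 1]
  | s_eta => [:: TCl (CA c_delta); TCl (CA c_alpha)]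
  | s_xi => [:: TCl (CA c_beta); TDl 18 1]
  | s_mu => [:: TCl (CA c_sigma); TCl (CA c_rho)]
  | s_eps => [:: TCl (CA c_omega); TDl 19 0]
  end.
Definition eT (v : vtx) : TCC := tw [:: TCl (CV v)].
Definition xT (a : sarr) : TCC := tw (lettS a).

Lemma WT w : \prod_(a <- w) xT a = tw (flatten (map lettS w)).
Proof.
elim: w => [|a w IH]; first by rewrite big_nil /tw big_nil.
by rewrite big_cons IH /= tw_cat.
Qed.

Lemma peT (p : qpath vtx sarr) :
  peval eT xT p = tw (if p.2 is [::] then [:: TCl (CV p.1)] else flatten (map lettS p.2)).
Proof. by case: p => v [|a w]; rewrite /peval /= ?WT. Qed.

Lemma tcC_sum (I : Type) (r : seq I) (P : pred I) (F : I -> C) :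
  tcC (\sum_(i <- r | P i) F i) = \sum_(i <- r | P i) tcC (F i).
Proof.
have Hm : {morph tcC : x y / x + y >-> x + y} by move=> x y; rewrite tcC_add.
exact: (big_morph tcC Hm tcC_0).
Qed.

Lemma goodT : good S_src S_tgt eT xT.
Proof.
split.
- move=> v w; rewrite /eT -tw_cat vtx_eqE.
  by case: v; case: w => /=; first [apply: tchkP1; vm_compute; reflexivity
                                  | apply: tchkP0; vm_compute; reflexivity].
- under eq_bigr => v _ do rewrite /eT /tw big_seq1 /=.
  by rewrite -tcC_sum; case: geC => _ -> _; rewrite tcC_1.
- move=> a; rewrite /xT /eT -!tw_cat.
  by case: a; apply: tchkP1; vm_compute; reflexivity.
Qed.

Lemma kv2 v v' w1 w2 c k : c = lam ^+ k ->
  tchkF (tnorm (flatten (map lettS w1))) (tnorm (flatten (map lettS w2))) k ->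
  w1 != [::] -> w2 != [::] ->
  keval eT xT [:: (1, (v, w1)); (- c * 1, (v', w2))] = 0.
Proof.
move=> -> /tchkP H; case: w1 H => // a1 w1; case: w2 => // a2 w2 H _ _.
rewrite !keval_cons keval_nil /peval /= !WT H.
by rewrite scale1r mulr1 scaleNr addr0 subrr.
Qed.

Lemma kv1 v w : tchk0 (tnorm (flatten (map lettS w))) -> w != [::] ->
  keval eT xT [:: (1, (v, w))] = 0.
Proof.
move=> /tchkP0 H; case: w H => // a w H _.
by rewrite !keval_cons keval_nil /peval /= !WT H scaler0 addr0.
Qed.

Ltac srel := first
  [ apply: (@kv2 _ _ _ _ _ 0%N); [by rewrite expr0 | by vm_compute | by [] | by [] ]
  | apply: (@kv2 _ _ _ _ _ 1%N); [by rewrite expr1 | by vm_compute | by [] | by [] ]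
  | apply: kv1; [by vm_compute | by []] ].

Lemma SFx_valid a : all (kq_valid S_src S_tgt) (SFx lam a).
Proof. by case: a; rewrite /SFx /kq_valid /kscale /kpath /= /is_qpath /= ?eqxx. Qed.

Lemma relsT r : r \in S_rels lam -> kq_valid S_src S_tgt r /\ keval eT xT r = 0.
Proof.
move=> /S_rels_mem [a Hr]; split; first by apply: (allP (SFx_valid a)).
move: Hr; case: a; rewrite /SFx /= !inE => Hr; do ?[case/orP: Hr => Hr]; move/eqP: Hr => ->; srel.
Qed.

Definition tbf (m : nat) : tform := if (m < 20)%N then FC (cbw m) else FD (m - 20) 0 [::] [::].
Definition tb (m : nat) : TCC := interp (tbf m).

Lemma tb_chk : all (fun m => wf (tbf m) && all (fun m' => perm_eq (tcoord (tbf m) m')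
   (if m' == m then [:: 0%N] else [::])) (iota 0 40)) (iota 0 40).
Proof. by vm_compute. Qed.

Lemma th_tb m' m : (m' < 40)%N -> (m < 40)%N -> th m' (tb m) = (m' == m)%:R.
Proof.
move=> H' H; have /andP[w A] := all_iota_lt tb_chk H.
rewrite /tb th_interp // (perm_big _ (all_iota_lt A H')).
by case: (m' == m); rewrite ?big_seq1 ?big_nil.
Qed.

Lemma decT (t : TCC) : t = \sum_(m < 40) th m t *: tb m.
Proof.
apply: TC_ext => m' Hm'; rewrite th_sum (bigD1 (Ordinal Hm')) //= big1.
  by rewrite th_scale th_tb // eqxx mulr1 addr0.
move=> i /eqP Hi; rewrite th_scale th_tb // (_ : (m' == i) = false) ?mulr0 //.
by apply/eqP => E; apply: Hi; apply: val_inj.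
Qed.

Definition slets (i : nat) : seq tlet :=
  if (srep i).2 is [::] then [:: TCl (CV (srep i).1)] else flatten (map lettS (srep i).2).

Lemma peT_srep i : peval eT xT (srep i) = tw (slets i).
Proof. by rewrite peT. Qed.

Definition pidx (m : nat) : nat :=
  match m with
  | 0 => 0
  | 1 => 1
  | 2 => 2
  | 3 => 3
  | 4 => 4
  | 5 => 5
  | 6 => 6
  | 7 => 7
  | 8 => 10
  | 9 => 11
  | 10 => 13
  | 11 => 9
  | 12 => 18
  | 13 => 26
  | 14 => 15
  | 15 => 32
  | 16 => 24
  | 17 => 16
  | 18 => 33
  | 19 => 25
  | 20 => 34
  | 21 => 35
  | 22 => 36
  | 23 => 37
  | 24 => 38
  | 25 => 39
  | 26 => 21
  | 27 => 23
  | 28 => 29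
  | 29 => 31
  | 30 => 27
  | 31 => 19
  | 34 => 14
  | 35 => 28
  | 36 => 20
  | 37 => 17
  | 38 => 12
  | 39 => 8
  | _ => 0 end%N.
Definition pexp (m : nat) : nat :=
  match m with
  | 0 => 0
  | 1 => 0
  | 2 => 0
  | 3 => 0
  | 4 => 0
  | 5 => 0
  | 6 => 0
  | 7 => 0
  | 8 => 0
  | 9 => 0
  | 10 => 0
  | 11 => 0
  | 12 => 0
  | 13 => 0
  | 14 => 0
  | 15 => 0
  | 16 => 0
  | 17 => 0
  | 18 => 0
  | 19 => 0
  | 20 => 0
  | 21 => 0
  | 22 => 0
  | 23 => 0
  | 24 => 1
  | 25 => 1
  | 26 => 0
  | 27 => 0
  | 28 => 1
  | 29 => 1
  | 30 => 1
  | 31 => 0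
  | 34 => 1
  | 35 => 1
  | 36 => 0
  | 37 => 1
  | 38 => 1
  | 39 => 0
  | _ => 0 end%N.
Definition pinv (m : nat) : nat :=
  match m with
  | 0 => 0
  | 1 => 1
  | 2 => 2
  | 3 => 3
  | 4 => 4
  | 5 => 5
  | 6 => 6
  | 7 => 7
  | 8 => 39
  | 9 => 11
  | 10 => 8
  | 11 => 9
  | 12 => 38
  | 13 => 10
  | 14 => 34
  | 15 => 14
  | 16 => 17
  | 17 => 37
  | 18 => 12
  | 19 => 31
  | 20 => 36
  | 21 => 26
  | 23 => 27
  | 24 => 16
  | 25 => 19
  | 26 => 13
  | 27 => 30
  | 28 => 35
  | 29 => 28
  | 31 => 29
  | 32 => 15
  | 33 => 18
  | 34 => 20
  | 35 => 21
  | 36 => 22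
  | 37 => 23
  | 38 => 24
  | 39 => 25
  | _ => 0 end%N.


Lemma mono_chk : all (fun m => (m == 32%N) || (m == 33%N) ||
   tchkF (tnorm (slets (pidx m))) (tbf m) (pexp m)) (iota 0 40).
Proof. by vm_compute. Qed.

Lemma mono_tw m : (m < 40)%N -> m != 32%N -> m != 33%N ->
  tw (slets (pidx m)) = lam ^+ pexp m *: tb m.
Proof.
move=> Hm H1 H2; have := all_iota_lt mono_chk Hm.
by rewrite (negPf H1) (negPf H2) /= => /tchkFP; rewrite -tw_norm.
Qed.

Lemma blk1 : tw (slets 22) = lam ^+ 0 *: tb 32 + lam ^+ 1 *: tb 33.
Proof. by rewrite tw_norm; apply: tchk2P; vm_compute. Qed.
Lemma blk2 : tw (slets 30) = lam ^+ 1 *: tb 32 + lam ^+ 1 *: tb 33.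
Proof. by rewrite tw_norm; apply: tchk2P; vm_compute. Qed.

Lemma pinv_chk : all (fun i => (i == 22%N) || (i == 30%N) ||
   [&& pidx (pinv i) == i, pinv i != 32%N, pinv i != 33%N & (pinv i < 40)%N]) (iota 0 40).
Proof. by vm_compute. Qed.

Lemma srep_valid i : (i < 40)%N -> is_qpath S_src S_tgt (srep i).
Proof. by do 40 (try (case: i => [|i])) => //; rewrite /srep /=; qp. Qed.

Variables (S : algType K) (eS : vtx -> S) (xS : sarr -> S).
Hypothesis lam0 : lam != 0.
Hypothesis lam1 : lam != 1.
Hypothesis geS : good S_src S_tgt eS xS.
Hypothesis surjS : forall b, exists f, kq_valid S_src S_tgt f /\ keval eS xS f = b.
Hypothesis kerS : forall f, kq_valid S_src S_tgt f ->
  (keval eS xS f = 0 <-> in_ideal S_src S_tgt (S_rels lam) f).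
Variable psi : S -> TCC.
Hypothesis plin : forall k u v, psi (k *: u + v) = k *: psi u + psi v.
Hypothesis pmul : forall u v, psi (u * v) = psi u * psi v.
Hypothesis p1 : psi 1 = 1.
Hypothesis pkey : forall f, kq_valid S_src S_tgt f -> psi (keval eS xS f) = keval eT xT f.

Local Notation sb := (sbe eS xS).

Lemma psi_0 : psi 0 = 0.
Proof.
have H := plin 1 0 0; rewrite !scale1r addr0 in H.
by apply: (addrI (psi 0)); rewrite addr0 -H.
Qed.
Lemma psi_add u v : psi (u + v) = psi u + psi v.
Proof. by have := plin 1 u v; rewrite !scale1r. Qed.
Lemma psi_scale k u : psi (k *: u) = k *: psi u.
Proof. by have := plin k u 0; rewrite !addr0 psi_0 addr0. Qed.
Lemma psi_sum (I : Type) (r : seq I) (P : pred I) (F : I -> S) :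
  psi (\sum_(i <- r | P i) F i) = \sum_(i <- r | P i) psi (F i).
Proof. exact: (big_morph psi psi_add psi_0). Qed.

Lemma psi_sbe i : (i < 40)%N -> psi (sb i) = tw (slets i).
Proof.
move=> Hi; rewrite /sbe -keval_kpath pkey; last by rewrite /kq_valid /= srep_valid.
by rewrite keval_kpath peT_srep.
Qed.

Lemma lam1' : 1 - lam != 0.
Proof. by rewrite subr_eq0 eq_sym. Qed.
Lemma laml : lam * (1 - lam) != 0.
Proof. by rewrite mulf_neq0 // lam1'. Qed.

Definition pre (m : nat) : S :=
  if m == 32%N then (1 - lam)^-1 *: (sb 22 - sb 30)
  else if m == 33%N then (lam * (1 - lam))^-1 *: (sb 30 - lam *: sb 22)
  else (lam ^+ pexp m)^-1 *: sb (pidx m).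

Lemma psi_opp u : psi (- u) = - psi u.
Proof. by rewrite -scaleN1r psi_scale scaleN1r. Qed.

Lemma pidx_bnd : all (fun m => (pidx m < 40)%N) (iota 0 40).
Proof. by vm_compute. Qed.

Lemma psi_pre m : (m < 40)%N -> psi (pre m) = tb m.
Proof.
move=> Hm; rewrite /pre; case: eqP => [->|/eqP H32].
  rewrite psi_scale psi_add psi_opp !psi_sbe // blk1 blk2 expr0 expr1 scale1r.
  rewrite opprD addrACA subrr addr0 -{1}[tb 32]scale1r -scalerBl.
  by rewrite scalerA mulVf ?lam1' // scale1r.
case: eqP => [->|/eqP H33].
  rewrite psi_scale psi_add psi_opp psi_scale !psi_sbe // blk1 blk2 expr0 expr1 scale1r.
  rewrite [lam *: (_ + _)]scalerDr [lam *: (lam *: _)]scalerA opprD addrACA subrr add0r -scalerBl.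
  have -> : lam - lam * lam = lam * (1 - lam) by rewrite mulrBr mulr1.
  by rewrite scalerA mulVf ?laml // scale1r.
rewrite psi_scale psi_sbe ?(all_iota_lt pidx_bnd Hm) // mono_tw //.
by rewrite scalerA mulVf ?scale1r // expf_neq0.
Qed.

Definition Dc (i m : nat) : K :=
  if i == 22%N then (if m == 32%N then 1 else if m == 33%N then lam else 0)
  else if i == 30%N then (if m == 32%N then lam else if m == 33%N then lam else 0)
  else (if m == pinv i then lam ^+ pexp (pinv i) else 0).

Lemma sum_sel1 (F : nat -> S) a x : (a < 40)%N ->
  \sum_(m < 40) (if nat_of_ord m == a then x else 0) *: F m = x *: F a.
Proof.
move=> Ha; rewrite (bigD1 (Ordinal Ha)) //= eqxx big1 ?addr0 // => i /eqP Hi.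
case: eqP => [E|]; last by rewrite scale0r.
by exfalso; apply: Hi; apply: val_inj.
Qed.

Lemma sum_sel2 (F : nat -> S) a b x y : (a < 40)%N -> (b < 40)%N -> a != b ->
  \sum_(m < 40) (if nat_of_ord m == a then x else if nat_of_ord m == b then y else 0) *: F m
  = x *: F a + y *: F b.
Proof.
move=> Ha Hb Hab; rewrite (bigD1 (Ordinal Ha)) //= eqxx (bigD1 (Ordinal Hb)) /=; last first.
  by apply/eqP => /(congr1 val) /= E; rewrite E eqxx in Hab.
rewrite eq_sym (negPf Hab) eqxx big1 ?addr0 // => i /andP[/eqP Hi /eqP Hi'].
case: eqP => [E|_]; first by exfalso; apply: Hi; apply: val_inj.
case: eqP => [E|_]; first by exfalso; apply: Hi'; apply: val_inj.
by rewrite scale0r.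
Qed.

Lemma comb (x y : S) (a b c : K) :
  a *: (x - y) + b *: (y - c *: x) = (a - b * c) *: x + (b - a) *: y.
Proof.
rewrite !scalerBr !scalerBl scalerA addrACA [RHS]addrACA; congr (_ + _).
exact: addrC.
Qed.

Lemma sbe_span i : (i < 40)%N -> sb i = \sum_(m < 40) Dc i m *: pre m.
Proof.
move=> Hi; rewrite /Dc; case: eqP => [->|/eqP H22].
  rewrite sum_sel2 // /pre /= [lam *: (_ *: _)]scalerA scale1r comb.
  have -> : (1 - lam)^-1 - lam * (lam * (1 - lam))^-1 * lam = 1.
    by field; rewrite lam0 lam1'.
  have -> : lam * (lam * (1 - lam))^-1 - (1 - lam)^-1 = 0.
    by field; rewrite lam0 lam1'.
  by rewrite scale1r scale0r addr0.
case: eqP => [->|/eqP H30].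
  rewrite sum_sel2 // /pre /= !scalerA comb.
  have -> : lam * (1 - lam)^-1 - lam * (lam * (1 - lam))^-1 * lam = 0.
    by field; rewrite lam0 lam1'.
  have -> : lam * (lam * (1 - lam))^-1 - lam * (1 - lam)^-1 = 1.
    by field; rewrite lam0 lam1'.
  by rewrite scale1r scale0r add0r.
have := all_iota_lt pinv_chk Hi; rewrite (negPf H22) (negPf H30) /=.
case/and4P => /eqP Hp H32 H33 Hb.
rewrite sum_sel1 // /pre (negPf H32) (negPf H33) Hp scalerA mulfV ?scale1r //.
by rewrite expf_neq0.
Qed.

Lemma span_pre u : exists b : nat -> K, u = \sum_(m < 40) b m *: pre m.
Proof.
have [c Hc] := spanS lam0 geS surjS kerS u.
exists (fun m => \sum_(i < 40) c i * Dc i m).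
rewrite Hc; under eq_bigr => i _ do rewrite sbe_span // scaler_sumr.
rewrite exchange_big /=; apply: eq_bigr => m _.
by rewrite scaler_suml; apply: eq_bigr => i _; rewrite scalerA.
Qed.

Lemma final_iso : iso_trivial_ext S C.
Proof.
exists (fun u => tcv (psi u)); split.
- by move=> k u v; rewrite plin.
- split; last by move=> u; apply: tl.
  move=> u1 u2 H; have E : psi u1 = psi u2 by apply: val_inj.
  have H0 : psi (u1 - u2) = 0 by rewrite psi_add psi_opp E subrr.
  apply/eqP; rewrite -subr_eq0; apply/eqP.
  have [b Hb] := span_pre (u1 - u2); rewrite Hb.
  have bz m : (m < 40)%N -> b m = 0.
    move=> Hm; have := congr1 (th m) H0; rewrite th_0 Hb psi_sum th_sum.
    rewrite (bigD1 (Ordinal Hm)) //= big1 ?addr0.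
      by rewrite psi_scale th_scale psi_pre // th_tb // eqxx mulr1.
    move=> i /eqP Hi; rewrite psi_scale th_scale psi_pre // th_tb //.
    by rewrite (_ : (m == i) = false) ?mulr0 //; apply/eqP => Em; apply: Hi; apply: val_inj.
  by rewrite big1 // => m _; rewrite bz // scale0r.
- move=> p Hp; pose t := @MkTC _ _ p (introT (lfbP _) Hp).
  exists (\sum_(m < 40) th m t *: pre m).
  rewrite psi_sum; under eq_bigr => m _ do rewrite psi_scale psi_pre //.
  by rewrite -decT.
- by rewrite p1.
- by move=> u v; rewrite pmul.
Qed.

End CMain.

Unset Implicit Arguments.

Theorem lemma3p7 (K : closedFieldType) (lam : K) :
  lam != 0 -> lam != 1 ->
  forall S C : algType K,
    presents S_src S_tgt (S_rels lam) S ->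
    presents C_src C_tgt (C_rels lam) C ->
    iso_trivial_ext S C.
Proof.
move=> l0 l1 S C [eS [xS [hS1 hS2 hS3 surjS kerS]]] [eC [xC [hC1 hC2 hC3 surjC kerC]]].
have geS : good S_src S_tgt eS xS by split.
have geC : good C_src C_tgt eC xC by split.
have [psiC [cl cm c1 ck]] := present_hom geC surjC kerC (model_good lam) (@model_rels _ lam).
have [psi [pl pm p1 pk]] := present_hom geS surjS kerS
  (goodT geC surjC kerC cl cm c1 ck) (relsT geC surjC kerC cl cm c1 ck).
exact: (final_iso geC surjC kerC cm c1 ck l0 l1 geS surjS kerS pl pm p1 pk).
Qed.
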